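(* Let $\Xi=\{(x_1,x_2): x_1,x_2\ge 0,\ x_1+x_2\le 1\}$, $x_0=1-x_1-x_2$, and for $\beta>0$ let $F_\beta(\mathbf{x})=-\frac12|\sum_{k=0}^2x_k\mathbf{v}_k|^2+\frac1\beta\sum_{k=0}^2x_k\log(3x_k)$ with $\mathbf{v}_k=(\cos(2\pi k/3),\sin(2\pi k/3))$. Let $\beta_1=2$, $\mathbf{p}=(1/3,1/3)$, and let $\beta_3$, $\mathbf{m}_i^\beta$, $\boldsymbol{\sigma}_i^\beta$ be as in the context. Then the critical points of $F_\beta$ in the interior of $\Xi$ are as follows: (1) For $\beta\in(0,\beta_3)$, $\mathbf{p}$ is the unique critical point, and $\mathbf{p}$ is the global minimum of $F_\beta$. (2) For $\beta=\beta_3$, the critical points are exactly $\mathbf{m}_0^\beta,\mathbf{m}_1^\beta,\mathbf{m}_2^\beta$ and $\mathbf{p}$. The first three are degenerate critical points which are not local minima, while $\mathbf{p}$ is the global minimum. (3) For $\beta\in(\beta_3,\beta_1)$, the critical points are exactly the four local minima $\mathbf{m}_0^\beta,\mathbf{m}_1^\beta,\mathbf{m}_2^\beta,\mathbf{p}$ and the three saddle points $\boldsymbol{\sigma}_0^\beta,\boldsymbol{\sigma}_1^\beta,\boldsymbol{\sigma}_2^\beta$. (4) For $\beta=\beta_1$, the critical points are exactly $\mathbf{m}_0^\beta,\mathbf{m}_1^\beta,\mathbf{m}_2^\beta$ and $\mathbf{p}$. The first three are local minima, and $\mathbf{p}$ is a degenerate critical point which is not a local minimum. (5) For $\beta\in(\beta_1,\infty)$,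 the critical points are exactly the three global minima $\mathbf{m}_0^\beta,\mathbf{m}_1^\beta,\mathbf{m}_2^\beta$, the three saddle points $\boldsymbol{\sigma}_0^\beta,\boldsymbol{\sigma}_1^\beta,\boldsymbol{\sigma}_2^\beta$, and the local maximum $\mathbf{p}$.
   Context: Convention $0\log0=0$. Define $f_0:(0,1/2)\to\mathbb{R}$ by $f_0(t)=\frac{2}{3(1-3t)}\log\frac{1-2t}{t}$ for $t\ne 1/3$ and $f_0(1/3)=2$. Let $m_0$ be the point at which $f_0$ attains its minimum (numerically $m_0\approx 0.2076$) and $\beta_3=f_0(m_0)$ (numerically $\approx1.8304$). For $\beta>\beta_3$ the equation $f_0(t)=\beta$ has exactly two solutions $p_\beta<m_0<q_\beta$ in $(0,1/2)$; for $\beta=\beta_3$ set $p_\beta=q_\beta=m_0$. For $\beta\ge\beta_3$ define $\mathbf{m}_0^\beta=(p_\beta,p_\beta)$, $\mathbf{m}_1^\beta=(1-2p_\beta,p_\beta)$, $\mathbf{m}_2^\beta=(p_\beta,1-2p_\beta)$, $\boldsymbol{\sigma}_0^\beta=(q_\beta,q_\beta)$, $\boldsymbol{\sigma}_1^\beta=(1-2q_\beta,q_\beta)$, $\boldsymbol{\sigma}_2^\beta=(q_\beta,1-2q_\beta)$. A critical point is called degenerate if the determinant of the Hessian of $F_\beta$ there vanishes; a saddle point is a critical point at which the Hessian has one positive and one negative eigenvalue. *)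

(* Defs.v *)
From Stdlib Require Import Reals Lra.
From Coquelicot Require Import Coquelicot.
Open Scope R_scope.

Definition plogp (t : R) : R :=
  if Req_EM_T t 0 then 0 else t * ln (3 * t).

Definition vx (k : R) : R := cos (2 * PI * k / 3).
Definition vy (k : R) : R := sin (2 * PI * k / 3).

(* the point (x1,x2) of Xi, with x0 = 1 - x1 - x2 *)
Definition in_Xi (x1 x2 : R) : Prop := 0 <= x1 /\ 0 <= x2 /\ x1 + x2 <= 1.
Definition in_int_Xi (x1 x2 : R) : Prop := 0 < x1 /\ 0 < x2 /\ x1 + x2 < 1.

Definition F (beta x1 x2 : R) : R :=
  let x0 := 1 - x1 - x2 in
  let s1 := x0 * vx 0 + x1 * vx 1 + x2 * vx 2 in
  let s2 := x0 * vy 0 + x1 * vy 1 + x2 * vy 2 in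
  - / 2 * (s1 ^ 2 + s2 ^ 2) + / beta * (plogp x0 + plogp x1 + plogp x2).

Definition d1F (beta a b : R) : R := Derive (fun t => F beta t b) a.
Definition d2F (beta a b : R) : R := Derive (fun t => F beta a t) b.

Definition H11 (beta a b : R) : R := Derive (fun t => d1F beta t b) a.
Definition H12 (beta a b : R) : R := Derive (fun t => d1F beta a t) b.
Definition H21 (beta a b : R) : R := Derive (fun t => d2F beta t b) a.
Definition H22 (beta a b : R) : R := Derive (fun t => d2F beta a t) b.

Definition hess_det (beta a b : R) : R :=
  H11 beta a b * H22 beta a b - H12 beta a b * H21 beta a b.

Definition hess_eigenvalue (beta a b l : R) : Prop :=
  (H11 beta a b - l) * (H22 beta a b - l) - H12 beta a b * H21 beta a b = 0.

Definition critical (beta a b : R) : Prop :=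
  d1F beta a b = 0 /\ d2F beta a b = 0.

Definition degenerate_critical (beta a b : R) : Prop :=
  critical beta a b /\ hess_det beta a b = 0.

Definition saddle (beta a b : R) : Prop :=
  critical beta a b /\
  exists l1 l2, 0 < l1 /\ l2 < 0 /\
    hess_eigenvalue beta a b l1 /\ hess_eigenvalue beta a b l2.

Definition global_min (beta a b : R) : Prop :=
  forall y1 y2, in_Xi y1 y2 -> F beta a b <= F beta y1 y2.

Definition local_min (beta a b : R) : Prop :=
  exists eps, 0 < eps /\ forall y1 y2, in_Xi y1 y2 ->
    (y1 - a) ^ 2 + (y2 - b) ^ 2 < eps ^ 2 -> F beta a b <= F beta y1 y2.

Definition local_max (beta a b : R) : Prop :=
  exists eps, 0 < eps /\ forall y1 y2, in_Xi y1 y2 ->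
    (y1 - a) ^ 2 + (y2 - b) ^ 2 < eps ^ 2 -> F beta y1 y2 <= F beta a b.

Definition f0 (t : R) : R :=
  if Req_EM_T t (1/3) then 2 else 2 / (3 * (1 - 3 * t)) * ln ((1 - 2 * t) / t).

Definition beta1 : R := 2.

(* Main.v *)
Require Import Defs.
From Stdlib Require Import Reals Lra Psatz.
From Coquelicot Require Import Coquelicot.
Open Scope R_scope.

Definition phi (b x : R) : R := -(3/4)*x^2 + /b * plogp x.
Definition phi1 (b x : R) : R := -(3/2)*x + /b * (ln (3*x) + 1).
Definition phi2 (b x : R) : R := -(3/2) + /(b*x).

Lemma plogp_pos x : 0 < x -> plogp x = x * ln (3*x).
Proof. intros Hx. unfold plogp. destruct (Req_EM_T x 0); [lra|reflexivity]. Qed.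
Lemma plogp_0 : plogp 0 = 0.
Proof. unfold plogp. destruct (Req_EM_T 0 0); [reflexivity|lra]. Qed.

Lemma F_eq b x1 x2 : F b x1 x2 = 1/4 + phi b (1-x1-x2) + phi b x1 + phi b x2.
Proof.
  unfold F, vx, vy, phi.
  replace (2*PI*0/3) with 0 by field.
  replace (2*PI*1/3) with (PI - PI/3) by field.
  replace (2*PI*2/3) with (PI/3 + PI) by field.
  rewrite cos_0, sin_0, Rtrigo_facts.cos_pi_minus, sin_PI_x, neg_cos, neg_sin, cos_PI3, sin_PI3.
  set (s := sqrt 3).
  assert (Hs : s*s = 3) by (apply sqrt_sqrt; lra).
  set (x0 := 1 - x1 - x2).
  assert (E: forall y0 y1 y2 : R, (y0*0 + y1*(s/2) + y2*-(s/2))^2 = (s*s)/4*(y1-y2)^2) by (intros; field).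
  rewrite E, Hs. unfold x0. set (B := / b). field.
Qed.

Lemma locally_pos x : 0 < x -> locally x (fun t => 0 < t).
Proof.
  intros Hx. exists (mkposreal x Hx). intros y Hy.
  change (Rabs (y - x) < x) in Hy. apply Rabs_def2 in Hy. lra.
Qed.

Lemma phi_deriv b x : 0 < x -> is_derive (phi b) x (phi1 b x).
Proof.
  intros Hx.
  apply is_derive_ext_loc with (fun t => -(3/4)*t^2 + /b * (t * ln (3*t))).
  - generalize (locally_pos x Hx). apply filter_imp. intros t Ht.
    unfold phi. rewrite plogp_pos; auto.
  - auto_derive; [lra|]. unfold phi1. replace (x * (3*1*/(3*x))) with 1 by (field; lra). set (B:=/b). field.
Qed.

Lemma phi1_deriv b x : 0 < x -> b <> 0 -> is_derive (phi1 b) x (phi2 b x).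
Proof.
  intros Hx Hb. unfold phi1. auto_derive. lra. unfold phi2. field. lra.
Qed.

Lemma isd_plus f g x df dg : is_derive f x df -> is_derive g x dg -> is_derive (fun t => f t + g t) x (df + dg).
Proof. intros; apply (is_derive_plus f g x df dg); auto. Qed.
Lemma isd_minus f g x df dg : is_derive f x df -> is_derive g x dg -> is_derive (fun t => f t - g t) x (df - dg).
Proof. intros; apply (is_derive_minus f g x df dg); auto. Qed.
Lemma isd_const (a x : R) : is_derive (fun _ => a) x 0.
Proof. apply (is_derive_const a x). Qed.
Lemma isd_affine f df x k m : is_derive f (k*x+m) df -> is_derive (fun t => f (k*t+m)) x (k*df).
Proof.
  intros H. apply (is_derive_comp f (fun t => k*t+m) x df k); auto.
  auto_derive; auto; ring.
Qed.

Lemma isd_neg_arg f df x m : is_derive f (m - x) df -> is_derive (fun t => f (m - t)) x (- df).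
Proof.
  intros H. apply is_derive_ext with (fun t => f ((-1)*t + m)).
  { intros; f_equal; ring. }
  replace (- df) with ((-1)*df) by ring. apply isd_affine.
  replace (-1*x+m) with (m-x) by ring. auto.
Qed.

Lemma locally_interval a b x : a < x < b -> locally x (fun t => a < t < b).
Proof.
  intros Hx. assert (He : 0 < Rmin (x-a) (b-x)) by (apply Rmin_pos; lra).
  exists (mkposreal _ He). intros y Hy.
  change (Rabs (y - x) < Rmin (x-a) (b-x)) in Hy. apply Rabs_def2 in Hy.
  generalize (Rmin_l (x-a) (b-x)) (Rmin_r (x-a) (b-x)). simpl in Hy. lra.
Qed.

Lemma d1F_eq b a c : 0 < a -> 0 < 1-a-c -> d1F b a c = phi1 b a - phi1 b (1-a-c).
Proof.
  intros Ha Hc. unfold d1F.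
  rewrite (Derive_ext _ (fun t => (1/4 + phi b (1-c-t) + phi b c) + phi b t)) by (intros; rewrite F_eq; replace (1-t-c) with (1-c-t) by ring; ring).
  apply is_derive_unique.
  replace (phi1 b a - phi1 b (1-a-c)) with ((0 + - phi1 b (1-c-a) + 0) + phi1 b a) by (replace (1-c-a) with (1-a-c) by ring; ring).
  apply isd_plus; [apply isd_plus; [apply isd_plus|] |].
  - apply isd_const.
  - apply isd_neg_arg. apply phi_deriv. lra.
  - apply isd_const.
  - apply phi_deriv. lra.
Qed.

Lemma d2F_eq b a c : 0 < c -> 0 < 1-a-c -> d2F b a c = phi1 b c - phi1 b (1-a-c).
Proof.
  intros Ha Hc. unfold d2F.
  rewrite (Derive_ext _ (fun t => (1/4 + phi b (1-a-t) + phi b a) + phi b t)) by (intros; rewrite F_eq; ring).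
  apply is_derive_unique.
  replace (phi1 b c - phi1 b (1-a-c)) with ((0 + - phi1 b (1-a-c) + 0) + phi1 b c) by ring.
  apply isd_plus; [apply isd_plus; [apply isd_plus|] |].
  - apply isd_const.
  - apply isd_neg_arg. apply phi_deriv. lra.
  - apply isd_const.
  - apply phi_deriv. lra.
Qed.

Definition x0of (a c : R) := 1 - a - c.

Lemma hess_eqs b a c : b <> 0 -> in_int_Xi a c ->
  H11 b a c = phi2 b a + phi2 b (1-a-c) /\
  H12 b a c = phi2 b (1-a-c) /\
  H21 b a c = phi2 b (1-a-c) /\
  H22 b a c = phi2 b c + phi2 b (1-a-c).
Proof.
  intros Hb [Ha [Hc Hac]]. split; [|split; [|split]].
  - unfold H11. apply is_derive_unique.
    apply is_derive_ext_loc with (fun t => phi1 b t - phi1 b (1-c-t)).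
    + generalize (locally_interval 0 (1-c) a ltac:(lra)). apply filter_imp.
      intros t Ht. rewrite d1F_eq by lra. replace (1-t-c) with (1-c-t) by ring. auto.
    + replace (phi2 b a + phi2 b (1-a-c)) with (phi2 b a - - phi2 b (1-c-a)) by (replace (1-c-a) with (1-a-c) by ring; ring).
      apply isd_minus. apply phi1_deriv; lra. apply isd_neg_arg. apply phi1_deriv; auto; lra.
  - unfold H12. apply is_derive_unique.
    apply is_derive_ext_loc with (fun t => phi1 b a - phi1 b (1-a-t)).
    + generalize (locally_interval 0 (1-a) c ltac:(lra)). apply filter_imp.
      intros t Ht. rewrite d1F_eq by lra. auto.
    + replace (phi2 b (1-a-c)) with (0 - - phi2 b (1-a-c)) by ring.
      apply isd_minus. apply isd_const. apply isd_neg_arg. apply phi1_deriv; auto; lra.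
  - unfold H21. apply is_derive_unique.
    apply is_derive_ext_loc with (fun t => phi1 b c - phi1 b (1-c-t)).
    + generalize (locally_interval 0 (1-c) a ltac:(lra)). apply filter_imp.
      intros t Ht. rewrite d2F_eq by lra. replace (1-t-c) with (1-c-t) by ring. auto.
    + replace (phi2 b (1-a-c)) with (0 - - phi2 b (1-c-a)) by (replace (1-c-a) with (1-a-c) by ring; ring).
      apply isd_minus. apply isd_const. apply isd_neg_arg. apply phi1_deriv; auto; lra.
  - unfold H22. apply is_derive_unique.
    apply is_derive_ext_loc with (fun t => phi1 b t - phi1 b (1-a-t)).
    + generalize (locally_interval 0 (1-a) c ltac:(lra)). apply filter_imp.
      intros t Ht. rewrite d2F_eq by lra. auto.
    + replace (phi2 b c + phi2 b (1-a-c)) with (phi2 b c - - phi2 b (1-a-c)) by ring.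
      apply isd_minus. apply phi1_deriv; lra. apply isd_neg_arg. apply phi1_deriv; auto; lra.
Qed.

Definition gg (b x : R) : R := / b * ln x - 3/2 * x.
Definition K (b t : R) : R := ln (1 - 2*t) - ln t - 3/2 * b * (1 - 3*t).

Lemma ln_lt_lin y : 0 < y -> y <> 1 -> ln y < y - 1.
Proof.
  intros Hy H1. assert (ln y <> 0).
  { intro E. apply H1. rewrite <- (exp_ln y Hy), E, exp_0. reflexivity. }
  generalize (exp_ineq1 (ln y) H). rewrite exp_ln by auto. lra.
Qed.
Lemma ln_le_lin y : 0 < y -> ln y <= y - 1.
Proof.
  intros Hy. generalize (exp_ineq1_le (ln y)). rewrite exp_ln by auto. lra.
Qed.

Lemma phi1_gg b x y : 0 < x -> 0 < y -> phi1 b x - phi1 b y = gg b x - gg b y.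
Proof.
  intros Hx Hy. unfold phi1, gg. rewrite !ln_mult by lra. ring.
Qed.

Lemma gg_inc b w w' : 0 < b -> 0 < w -> w < w' -> w' <= 2/(3*b) -> gg b w < gg b w'.
Proof.
  intros Hb Hw Hww Hw'. unfold gg.
  assert (h1 : ln w - ln w' < w/w' - 1).
  { rewrite <- ln_div by lra. apply ln_lt_lin. apply Rdiv_lt_0_compat; lra.
    intro E. apply (f_equal (fun z => z * w')) in E. field_simplify in E; lra. }
  assert (h2 : w/w' - 1 = -((w'-w) * / w')) by (field; lra).
  assert (h3 : 3*b/2 <= / w').
  { replace (3*b/2) with (/ (2/(3*b))) by (field; lra). apply Rinv_le_contravar; lra. }
  assert (h4 : (w'-w)*(3*b/2) <= (w'-w) * / w') by (apply Rmult_le_compat_l; lra).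
  assert (h5 : (w'-w)*(3*b/2) < ln w' - ln w) by lra.
  assert (h6 : / b * ((w'-w)*(3*b/2)) < / b * (ln w' - ln w)).
  { apply Rmult_lt_compat_l; auto. apply Rinv_0_lt_compat; auto. }
  replace (/ b * ((w'-w)*(3*b/2))) with (3/2*(w'-w)) in h6 by (field; lra).
  lra.
Qed.

Lemma gg_dec b w w' : 0 < b -> 2/(3*b) <= w -> w < w' -> gg b w' < gg b w.
Proof.
  intros Hb Hw Hww. unfold gg.
  assert (Hxm : 0 < 2/(3*b)) by (apply Rdiv_lt_0_compat; lra).
  assert (h1 : ln w' - ln w < w'/w - 1).
  { rewrite <- ln_div by lra. apply ln_lt_lin. apply Rdiv_lt_0_compat; lra.
    intro E. apply (f_equal (fun z => z * w)) in E. field_simplify in E; lra. }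
  assert (h2 : w'/w - 1 = (w'-w) * / w) by (field; lra).
  assert (h3 : / w <= 3*b/2).
  { replace (3*b/2) with (/ (2/(3*b))) by (field; lra). apply Rinv_le_contravar; lra. }
  assert (h4 : (w'-w) * / w <= (w'-w)*(3*b/2)) by (apply Rmult_le_compat_l; lra).
  assert (h6 : / b * (ln w' - ln w) < / b * ((w'-w)*(3*b/2))).
  { apply Rmult_lt_compat_l; [apply Rinv_0_lt_compat; auto| lra]. }
  replace (/ b * ((w'-w)*(3*b/2))) with (3/2*(w'-w)) in h6 by (field; lra).
  lra.
Qed.

Lemma gg_split b x y : 0 < b -> 0 < x -> x < y -> gg b x = gg b y -> x < 2/(3*b) < y.
Proof.
  intros Hb Hx Hxy E. split.
  - destruct (Rlt_or_le x (2/(3*b))) as [h|h]; auto.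
    generalize (gg_dec b x y Hb h Hxy). lra.
  - destruct (Rlt_or_le (2/(3*b)) y) as [h|h]; auto.
    generalize (gg_inc b x y Hb Hx Hxy h). lra.
Qed.

Lemma gg_inj b x y : 0 < b -> 0 < x -> 0 < y -> gg b x = gg b y ->
  x = y \/ (x < 2/(3*b) < y) \/ (y < 2/(3*b) < x).
Proof.
  intros Hb Hx Hy E. destruct (Rtotal_order x y) as [h|[h|h]].
  - right; left. apply gg_split; auto.
  - left; auto.
  - right; right. apply gg_split; auto.
Qed.

Lemma gg_two b x y z : 0 < b -> 0 < x -> 0 < y -> 0 < z ->
  gg b x = gg b y -> gg b y = gg b z -> x = y \/ y = z \/ x = z.
Proof.
  intros Hb Hx Hy Hz E1 E2.
  destruct (gg_inj b x y Hb Hx Hy E1) as [h|[h|h]]; auto;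
  destruct (gg_inj b y z Hb Hy Hz E2) as [h'|[h'|h']]; auto;
  assert (E3 : gg b x = gg b z) by congruence;
  destruct (gg_inj b x z Hb Hx Hz E3) as [h''|[h''|h'']]; auto; lra.
Qed.

Lemma gg_K b t : 0 < b -> 0 < t < 1/2 -> gg b t - gg b (1-2*t) = - / b * K b t.
Proof. intros Hb Ht. unfold gg, K. field. lra. Qed.

Lemma crit_gg b a c : 0 < b -> in_int_Xi a c ->
  (critical b a c <-> gg b a = gg b (1-a-c) /\ gg b c = gg b (1-a-c)).
Proof.
  intros Hb HX. destruct HX as [Ha [Hc Hac]]. unfold critical.
  rewrite d1F_eq, d2F_eq by lra. rewrite !phi1_gg by lra. split; intros [h1 h2]; split; lra.
Qed.

Lemma K_gg b t : 0 < b -> 0 < t < 1/2 -> (K b t = 0 <-> gg b t = gg b (1-2*t)).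
Proof.
  intros Hb Ht. generalize (gg_K b t Hb Ht). intro E. split; intro H.
  - rewrite H in E. lra.
  - assert (/ b * K b t = 0) by lra. apply Rmult_integral in H0. destruct H0; auto.
    exfalso. generalize (Rinv_0_lt_compat b Hb). lra.
Qed.

Definition sympts (a c t : R) : Prop :=
  (a, c) = (t, t) \/ (a, c) = (1-2*t, t) \/ (a, c) = (t, 1-2*t).

Lemma crit_char b a c : 0 < b -> in_int_Xi a c ->
  (critical b a c <-> exists t, 0 < t < 1/2 /\ K b t = 0 /\ sympts a c t).
Proof.
  intros Hb HX. rewrite crit_gg by auto. destruct HX as [Ha [Hc Hac]]. split.
  - intros [E1 E2].
    assert (E3 : gg b a = gg b c) by congruence.
    destruct (gg_two b a c (1-a-c) Hb Ha Hc ltac:(lra) E3 E2) as [h|[h|h]].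
    + exists a. split; [lra|]. split.
      * apply (proj2 (K_gg b a Hb ltac:(lra))). replace (1-2*a) with (1-a-c) by lra. auto.
      * left. rewrite <- h. auto.
    + exists c. split; [lra|]. split.
      * apply (proj2 (K_gg b c Hb ltac:(lra))). replace (1-2*c) with a by lra. congruence.
      * right; left. f_equal. lra.
    + exists a. split; [lra|]. split.
      * apply (proj2 (K_gg b a Hb ltac:(lra))). replace (1-2*a) with c by lra. congruence.
      * right; right. f_equal. lra.
  - intros [t [Ht [HK Hs]]]. apply (proj1 (K_gg b t Hb Ht)) in HK.
    destruct Hs as [E|[E|E]]; injection E; intros; subst.
    + replace (1-t-t) with (1-2*t) by ring. auto.
    + replace (1-(1-2*t)-t) with t by ring. auto.
    + replace (1-t-(1-2*t)) with t by ring. auto.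
Qed.

Lemma mono_le (f df : R -> R) a b : a <= b -> (forall x, a <= x <= b -> is_derive f x (df x)) ->
  (forall x, a <= x <= b -> 0 <= df x) -> f a <= f b.
Proof.
  intros Hab Hd Hp. destruct (Req_dec a b) as [E|E]. { subst; lra. }
  destruct (MVT_gen f a b df) as [c [Hc Hm]].
  - intros x Hx. apply Hd. rewrite Rmin_left, Rmax_right in Hx by lra. lra.
  - intros x Hx. rewrite Rmin_left, Rmax_right in Hx by lra.
    apply derivable_continuous_pt. apply ex_derive_Reals_0. eexists. apply Hd; lra.
  - rewrite Rmin_left, Rmax_right in Hc by lra.
    assert (0 <= df c * (b - a)) by (apply Rmult_le_pos; [apply Hp; lra| lra]). lra.
Qed.

Lemma mono_lt (f df : R -> R) a b : a < b -> (forall x, a <= x <= b -> is_derive f x (df x)) ->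
  (forall x, a <= x <= b -> 0 < df x) -> f a < f b.
Proof.
  intros Hab Hd Hp.
  destruct (MVT_gen f a b df) as [c [Hc Hm]].
  - intros x Hx. apply Hd. rewrite Rmin_left, Rmax_right in Hx by lra. lra.
  - intros x Hx. rewrite Rmin_left, Rmax_right in Hx by lra.
    apply derivable_continuous_pt. apply ex_derive_Reals_0. eexists. apply Hd; lra.
  - rewrite Rmin_left, Rmax_right in Hc by lra.
    assert (0 < df c * (b - a)) by (apply Rmult_lt_0_compat; [apply Hp; lra| lra]). lra.
Qed.

Lemma rolle_gen (f df : R -> R) a b : a < b -> (forall x, a <= x <= b -> is_derive f x (df x)) ->
  f a = f b -> exists c, a < c < b /\ df c = 0.
Proof.
  intros Hab Hd E.
  assert (pr : forall x, a < x < b -> derivable_pt f x).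
  { intros x Hx. apply ex_derive_Reals_0. eexists. apply Hd. lra. }
  destruct (Rolle f a b pr) as [c [P Hc]]; auto.
  - intros x Hx. apply derivable_continuous_pt. apply ex_derive_Reals_0. eexists. apply Hd; lra.
  - exists c. split; auto. rewrite <- Hc. symmetry. apply derive_pt_eq_0.
    apply is_derive_Reals. apply Hd. lra.
Qed.

Lemma fermat_min (f : R -> R) df a b c : a < c < b -> is_derive f c df ->
  (forall x, a < x < b -> f c <= f x) -> df = 0.
Proof.
  intros Hc Hd Hm.
  assert (pr : derivable_pt f c) by (apply ex_derive_Reals_0; eexists; eauto).
  rewrite <- (deriv_minimum f a b c pr) by (tauto || (intros; apply Hm; lra)).
  symmetry. apply derive_pt_eq_0. apply is_derive_Reals. auto.
Qed.

Definition Kd (b t : R) : R := (9*b*t*(1-2*t) - 2) / (2*t*(1-2*t)).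
Definition Kroot (b c : R) : Prop := 9*b*c*(1-2*c) = 2.

Lemma K_deriv b t : 0 < t < 1/2 -> is_derive (K b) t (Kd b t).
Proof.
  intros Ht. unfold K, Kd. auto_derive. lra. field. lra.
Qed.

Lemma Kd_zero b t : 0 < t < 1/2 -> Kd b t = 0 -> Kroot b t.
Proof.
  intros Ht E. unfold Kd, Kroot in *.
  assert (0 < 2*t*(1-2*t)) by nra.
  apply (f_equal (fun z => z * (2*t*(1-2*t)))) in E. field_simplify in E; lra.
Qed.

Lemma Kd_sign b t : 0 < t < 1/2 -> (0 <= Kd b t <-> 0 <= 9*b*t*(1-2*t) - 2) /\ (0 < Kd b t <-> 0 < 9*b*t*(1-2*t) - 2).
Proof.
  intros Ht. unfold Kd. assert (Hp : 0 < 2*t*(1-2*t)) by nra.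
  split; split; intro H.
  - apply (Rmult_le_compat_r (2*t*(1-2*t))) in H; [|lra]. field_simplify in H; lra.
  - apply Rmult_le_pos; auto. left; apply Rinv_0_lt_compat; auto.
  - apply (Rmult_lt_compat_r (2*t*(1-2*t))) in H; [|lra]. field_simplify in H; lra.
  - apply Rmult_lt_0_compat; auto. apply Rinv_0_lt_compat; auto.
Qed.

Lemma rolleK b z1 z2 : 0 < z1 -> z1 < z2 -> z2 < 1/2 -> K b z1 = K b z2 ->
  exists c, z1 < c < z2 /\ Kroot b c.
Proof.
  intros H1 H2 H3 E.
  destruct (rolle_gen (K b) (Kd b) z1 z2) as [c [Hc Hd]]; auto.
  - intros x Hx. apply K_deriv. lra.
  - exists c. split; auto. apply Kd_zero; auto. lra.
Qed.

Lemma Kroot_sum b c1 c2 : Kroot b c1 -> Kroot b c2 -> c1 <> c2 -> c1 + c2 = 1/2 /\ b <> 0.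
Proof.
  unfold Kroot. intros E1 E2 N.
  assert (Hb : b <> 0) by (intro; subst; lra).
  split; auto.
  assert (9*b*(c1-c2)*(1-2*(c1+c2)) = 0).
  { replace (9*b*(c1-c2)*(1-2*(c1+c2))) with (9*b*c1*(1-2*c1) - 9*b*c2*(1-2*c2)) by ring. lra. }
  apply Rmult_integral in H. destruct H as [H|H]; [|lra].
  apply Rmult_integral in H. destruct H as [H|H]; [|exfalso; apply N; lra].
  apply Rmult_integral in H. destruct H; [lra|contradiction].
Qed.

Lemma Kfact b c1 c2 t : Kroot b c1 -> Kroot b c2 -> c1 <> c2 ->
  9*b*t*(1-2*t) - 2 = 18*b*(t-c1)*(c2-t).
Proof.
  intros E1 E2 N. destruct (Kroot_sum b c1 c2 E1 E2 N) as [S _].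
  unfold Kroot in E1. replace c2 with (1/2 - c1) by lra.
  transitivity (9*b*t*(1-2*t) - 9*b*c1*(1-2*c1)); [lra|field].
Qed.

Lemma K_le b x y : 0 < x -> x <= y -> y < 1/2 ->
  (forall t, x <= t <= y -> 0 <= 9*b*t*(1-2*t) - 2) -> K b x <= K b y.
Proof.
  intros. apply (mono_le (K b) (Kd b)); auto.
  - intros; apply K_deriv; lra.
  - intros t Ht. apply (proj2 (proj1 (Kd_sign b t ltac:(lra)))). auto.
Qed.
Lemma K_lt b x y : 0 < x -> x < y -> y < 1/2 ->
  (forall t, x <= t <= y -> 0 < 9*b*t*(1-2*t) - 2) -> K b x < K b y.
Proof.
  intros. apply (mono_lt (K b) (Kd b)); auto.
  - intros; apply K_deriv; lra.
  - intros t Ht. apply (proj2 (proj2 (Kd_sign b t ltac:(lra)))). auto.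
Qed.
Lemma isd_opp (f : R -> R) x df : is_derive f x df -> is_derive (fun t => - f t) x (- df).
Proof. intros H. apply (is_derive_opp f x df H). Qed.

Lemma K_ge b x y : 0 < x -> x <= y -> y < 1/2 ->
  (forall t, x <= t <= y -> 9*b*t*(1-2*t) - 2 <= 0) -> K b y <= K b x.
Proof.
  intros. cut (- K b x <= - K b y); [lra|].
  apply (mono_le (fun t => - K b t) (fun t => - Kd b t)); auto.
  - intros; apply isd_opp, K_deriv; lra.
  - intros t Ht. destruct (Kd_sign b t ltac:(lra)) as [_ [h _]].
    specialize (H2 t Ht). destruct (Rle_or_lt (Kd b t) 0); [lra|]. specialize (h H3). lra.
Qed.
Lemma K_gt b x y : 0 < x -> x < y -> y < 1/2 ->
  (forall t, x <= t <= y -> 9*b*t*(1-2*t) - 2 < 0) -> K b y < K b x.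
Proof.
  intros. cut (- K b x < - K b y); [lra|].
  apply (mono_lt (fun t => - K b t) (fun t => - Kd b t)); auto.
  - intros; apply isd_opp, K_deriv; lra.
  - intros t Ht. destruct (Kd_sign b t ltac:(lra)) as [[h _] _].
    specialize (H2 t Ht). destruct (Rle_or_lt 0 (Kd b t)); [|lra]. specialize (h H3). lra.
Qed.

Definition Gam (b t : R) : R := 2 * phi b t + phi b (1 - 2*t).

Lemma Gam_deriv b t : 0 < b -> 0 < t < 1/2 -> is_derive (Gam b) t (-(2/b) * K b t).
Proof.
  intros Hb Ht. unfold Gam.
  replace (-(2/b) * K b t) with (2 * phi1 b t + -2 * phi1 b (-2*t+1)).
  - apply isd_plus.
    + apply is_derive_scal. apply phi_deriv. lra.
    + apply is_derive_ext with (fun s => phi b (-2*s+1)). { intros; f_equal; ring. }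
      apply isd_affine. apply phi_deriv. lra.
  - replace (-2*t+1) with (1-2*t) by ring.
    replace (2 * phi1 b t + -2 * phi1 b (1-2*t)) with (2*(phi1 b t - phi1 b (1-2*t))) by ring.
    rewrite phi1_gg by lra. rewrite gg_K by lra. field. lra.
Qed.

Lemma Gam_dec b x y : 0 < b -> 0 < x -> x <= y -> y < 1/2 ->
  (forall t, x <= t <= y -> 0 <= K b t) -> Gam b y <= Gam b x.
Proof.
  intros Hb Hx Hxy Hy HK. cut (- Gam b x <= - Gam b y); [lra|].
  apply (mono_le (fun t => - Gam b t) (fun t => - (-(2/b) * K b t))); auto.
  - intros; apply isd_opp, Gam_deriv; auto; lra.
  - intros t Ht. specialize (HK t Ht).
    assert (0 <= 2/b * K b t) by (apply Rmult_le_pos; auto; apply Rlt_le, Rdiv_lt_0_compat; lra). lra.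
Qed.
Lemma Gam_inc b x y : 0 < b -> 0 < x -> x <= y -> y < 1/2 ->
  (forall t, x <= t <= y -> K b t <= 0) -> Gam b x <= Gam b y.
Proof.
  intros Hb Hx Hxy Hy HK.
  apply (mono_le (Gam b) (fun t => (-(2/b) * K b t))); auto.
  - intros; apply Gam_deriv; auto; lra.
  - intros t Ht. specialize (HK t Ht).
    assert (0 <= 2/b * - K b t) by (apply Rmult_le_pos; [apply Rlt_le, Rdiv_lt_0_compat|]; lra). lra.
Qed.
Lemma Gam_decs b x y : 0 < b -> 0 < x -> x < y -> y < 1/2 ->
  (forall t, x <= t <= y -> 0 < K b t) -> Gam b y < Gam b x.
Proof.
  intros Hb Hx Hxy Hy HK. cut (- Gam b x < - Gam b y); [lra|].
  apply (mono_lt (fun t => - Gam b t) (fun t => - (-(2/b) * K b t))); auto.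
  - intros; apply isd_opp, Gam_deriv; auto; lra.
  - intros t Ht. specialize (HK t Ht).
    assert (0 < 2/b * K b t) by (apply Rmult_lt_0_compat; auto; apply Rdiv_lt_0_compat; lra). lra.
Qed.
Lemma Gam_incs b x y : 0 < b -> 0 < x -> x < y -> y < 1/2 ->
  (forall t, x <= t <= y -> K b t < 0) -> Gam b x < Gam b y.
Proof.
  intros Hb Hx Hxy Hy HK.
  apply (mono_lt (Gam b) (fun t => (-(2/b) * K b t))); auto.
  - intros; apply Gam_deriv; auto; lra.
  - intros t Ht. specialize (HK t Ht).
    assert (0 < 2/b * - K b t) by (apply Rmult_lt_0_compat; [apply Rdiv_lt_0_compat|]; lra). lra.
Qed.

Lemma F_tt b t : F b t t = 1/4 + Gam b t.
Proof. rewrite F_eq. unfold Gam. replace (1-t-t) with (1-2*t) by ring. ring. Qed.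
Lemma F_st b t : F b (1-2*t) t = 1/4 + Gam b t.
Proof. rewrite F_eq. unfold Gam. replace (1-(1-2*t)-t) with t by ring. ring. Qed.
Lemma F_ts b t : F b t (1-2*t) = 1/4 + Gam b t.
Proof. rewrite F_eq. unfold Gam. replace (1-t-(1-2*t)) with t by ring. ring. Qed.

Lemma phi_0 b : phi b 0 = 0.
Proof. unfold phi. rewrite plogp_0. ring. Qed.

Lemma atanh_ineq m s : 0 < m -> 0 <= s < m -> 2*s/m <= ln (m+s) - ln (m-s).
Proof.
  intros Hm Hs. cut (0 - 0 - 2*0/m <= ln (m+s) - ln (m-s) - 2*s/m).
  { replace (0-0-2*0/m) with 0 by (field; lra). lra. }
  replace (0 - 0 - 2*0/m) with (ln (m+0) - ln (m-0) - 2*0/m)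
    by (replace (m+0) with m by ring; replace (m-0) with m by ring; ring).
  apply (mono_le (fun s => ln (m+s) - ln (m-s) - 2*s/m)
                 (fun s => /(m+s) + /(m-s) - 2/m)); [lra| |].
  - intros x Hx. auto_derive. lra. field. lra.
  - intros x Hx.
    replace (/(m+x) + /(m-x) - 2/m) with (2*x*x/(m*(m+x)*(m-x))) by (field; lra).
    apply Rmult_le_pos; [nra|]. left; apply Rinv_0_lt_compat.
    apply Rmult_lt_0_compat; [apply Rmult_lt_0_compat|]; lra.
Qed.

Lemma ln2_gt : / 2 < ln 2.
Proof. exact ln_lt_2. Qed.

Lemma MC b u v : 0 < b -> 0 <= u -> 0 <= v -> (u+v)/2 <= 2/(3*b) ->
  2 * phi b ((u+v)/2) <= phi b u + phi b v.
Proof.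
  intros Hb.
  assert (main : forall u v, 0 <= u -> u <= v -> (u+v)/2 <= 2/(3*b) ->
            2 * phi b ((u+v)/2) <= phi b u + phi b v).
  { clear u v. intros u v Hu Huv Hm.
    set (m := (u+v)/2) in *. set (d := (v-u)/2).
    assert (Hv : v = m + d) by (unfold m, d; field). assert (Hu' : u = m - d) by (unfold m, d; field).
    destruct (Req_dec m 0) as [Em|Em].
    { assert (u = 0) by (unfold m in Em; lra). assert (v = 0) by (unfold m in Em; lra).
      rewrite Em, H, H0, !phi_0. lra. }
    assert (Hm0 : 0 < m) by (unfold m in *; lra).
    destruct (Req_dec u 0) as [E0|E0].
    -
      rewrite E0, phi_0. assert (v = 2*m) by (unfold m; rewrite E0; field). rewrite H.
      unfold phi. rewrite !plogp_pos by lra.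
      replace (3*(2*m)) with (2*(3*m)) by ring. rewrite (ln_mult 2 (3*m)) by lra.
      assert (h : 3*b/4*m <= /2).
      { apply (Rmult_le_compat_l (3*b/4)) in Hm; [|lra].
        replace (3*b/4*(2/(3*b))) with (/2) in Hm by (field; lra). lra. }
      assert (h2 : 3/2 * m * m <= 2*m/b * ln 2).
      { assert (3*b/4*m < ln 2) by (generalize ln2_gt; lra).
        apply (Rmult_le_compat_l (2*m/b)) in h; [|apply Rlt_le, Rdiv_lt_0_compat; lra].
        replace (2*m/b*(3*b/4*m)) with (3/2*m*m) in h by (field; lra).
        assert (2*m/b*(/2) <= 2*m/b * ln 2).
        { apply Rmult_le_compat_l; [apply Rlt_le, Rdiv_lt_0_compat; lra| generalize ln2_gt; lra]. }
        lra. }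
      replace (2 * (- (3 / 4) * m ^ 2 + / b * (m * ln (3 * m))))
        with (-(3/2)*m*m + 2*m/b*ln (3*m)) by (field; lra).
      replace (- (3 / 4) * (2 * m) ^ 2 + / b * (2 * m * (ln 2 + ln (3 * m))))
        with (-3*m*m + 2*m/b*ln 2 + 2*m/b*ln (3*m)) by (field; lra).
      lra.
    - assert (Hd : 0 <= d < m) by (unfold d, m in *; lra).
      rewrite Hv, Hu'.
      replace (2 * phi b m) with (phi b (m+0) + phi b (m-0)) by (replace (m+0) with m by ring; replace (m-0) with m by ring; ring).
      replace (phi b (m - d) + phi b (m + d)) with (phi b (m + d) + phi b (m - d)) by ring.
      apply (mono_le (fun s => phi b (m+s) + phi b (m-s)) (fun s => phi1 b (m+s) - phi1 b (m-s))); [lra| |].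
      + intros x Hx. apply isd_plus.
        * apply is_derive_ext with (fun s => phi b (1*s+m)). { intros; f_equal; ring. }
          replace (phi1 b (m+x)) with (1 * phi1 b (1*x+m)) by (rewrite Rmult_1_l; f_equal; ring).
          apply isd_affine. apply phi_deriv. lra.
        * apply isd_neg_arg. apply phi_deriv. lra.
      + intros x Hx. rewrite phi1_gg by lra. unfold gg.
        assert (h1 := atanh_ineq m x Hm0 ltac:(lra)).
        assert (h3 : 3/2 <= / (b*m)).
        { replace (3/2) with (/ (2/3)) by field. apply Rinv_le_contravar; [apply Rmult_lt_0_compat; lra|].
          apply (Rmult_le_compat_l b) in Hm; [|lra]. replace (b*(2/(3*b))) with (2/3) in Hm by (field; lra). lra. }
        assert (h4 : 0 <= x * (/ (b*m) - 3/2)) by (apply Rmult_le_pos; lra).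
        assert (h5 : /b * (2*x/m) <= /b * (ln (m+x) - ln (m-x))).
        { apply Rmult_le_compat_l; auto. left; apply Rinv_0_lt_compat; auto. }
        replace (/b * (2*x/m)) with (2 * (x * / (b*m))) in h5 by (field; lra).
        nra. }
  intros Hu Hv Hm. destruct (Rle_or_lt u v) as [h|h].
  - apply main; auto.
  - replace ((u+v)/2) with ((v+u)/2) by field. rewrite (Rplus_comm (phi b u)). apply main; auto; lra.
Qed.

Lemma xm_pos b : 0 < b -> 0 < 2/(3*b).
Proof. intros; apply Rdiv_lt_0_compat; lra. Qed.

Lemma gg_dec_le b w w' : 0 < b -> 2/(3*b) <= w -> w <= w' -> gg b w' <= gg b w.
Proof.
  intros Hb Hw Hww. destruct (Req_dec w w') as [E|E]; [subst; lra|].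
  left. apply gg_dec; auto. lra.
Qed.

Lemma SP b u v : 0 < b -> 2/(3*b) <= u -> 2/(3*b) <= v ->
  phi b (2/(3*b)) + phi b (u+v-2/(3*b)) <= phi b u + phi b v.
Proof.
  intros Hb.
  assert (Hx := xm_pos b Hb). set (xm := 2/(3*b)) in *.
  assert (main : forall u v, xm <= u -> u <= v -> phi b xm + phi b (u+v-xm) <= phi b u + phi b v).
  { clear u v. intros u v Hu Huv. set (S := u+v).
    replace (phi b u + phi b v) with (phi b u + phi b (S - u)) by (unfold S; f_equal; f_equal; ring).
    apply (mono_le (fun w => phi b w + phi b (S - w)) (fun w => phi1 b w - phi1 b (S - w))); [lra| |].
    - intros x Hx'. apply isd_plus. apply phi_deriv; lra.
      apply isd_neg_arg. apply phi_deriv. unfold S; lra.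
    - intros x Hx'. rewrite phi1_gg by (unfold S; lra).
      assert (gg b (S - x) <= gg b x) by (apply gg_dec_le; unfold S, xm in *; lra). lra. }
  intros Hu Hv. destruct (Rle_or_lt u v).
  - apply main; auto.
  - replace (u+v-xm) with (v+u-xm) by ring. rewrite (Rplus_comm (phi b u)). apply main; lra.
Qed.

Lemma CT b c y : 0 < b -> 2/(3*b) <= c -> 2/(3*b) <= y ->
  phi b y <= phi b c + phi1 b c * (y - c).
Proof.
  intros Hb Hc Hy. assert (Hx := xm_pos b Hb).
  cut (phi b y - phi1 b c * y <= phi b c - phi1 b c * c); [lra|].
  assert (Hd : forall x, 0 < x -> is_derive (fun w => phi b w - phi1 b c * w) x (phi1 b x - phi1 b c)).
  { intros x Hx'. apply isd_minus. apply phi_deriv; auto.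
    replace (phi1 b c) with (phi1 b c * 1) at 2 by ring. apply is_derive_scal.
    apply is_derive_ext with (fun t => t). { auto. } apply (is_derive_id x). }
  destruct (Rle_or_lt c y).
  - cut (-(phi b c - phi1 b c * c) <= - (phi b y - phi1 b c * y)); [lra|].
    apply (mono_le (fun w => -(phi b w - phi1 b c * w)) (fun x => - (phi1 b x - phi1 b c))); auto.
    + intros; apply isd_opp, Hd; lra.
    + intros x Hx'. rewrite phi1_gg by lra. assert (gg b x <= gg b c) by (apply gg_dec_le; lra). lra.
  - apply (mono_le (fun w => (phi b w - phi1 b c * w)) (fun x => (phi1 b x - phi1 b c))); [lra| |].
    + intros; apply Hd; lra.
    + intros x Hx'. rewrite phi1_gg by lra. assert (gg b c <= gg b x) by (apply gg_dec_le; lra). lra.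
Qed.

Lemma RED_s b a u v : 0 < b -> 0 <= a -> a <= u -> u <= v -> a + u + v = 1 ->
  exists t, 0 <= t <= 2/(3*b) /\ t < 1/2 /\ Gam b t <= phi b a + phi b u + phi b v.
Proof.
  intros Hb Ha Hau Huv Hs. assert (Hx := xm_pos b Hb). unfold Gam.
  destruct (Rle_or_lt ((a+u)/2) (2/(3*b))) as [h|h].
  - exists ((a+u)/2). split; [lra|]. split; [lra|].
    assert (h1 := MC b a u Hb Ha ltac:(lra) h).
    replace (1 - 2*((a+u)/2)) with v by lra. lra.
  - destruct (Rle_or_lt a (2/(3*b))) as [h'|h'].
    + exists ((a + 2/(3*b))/2). split; [lra|]. split; [lra|].
      assert (h1 := SP b u v Hb ltac:(lra) ltac:(lra)).
      assert (h2 := MC b a (2/(3*b)) Hb Ha ltac:(lra) ltac:(lra)).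
      replace (1 - 2*((a + 2/(3*b))/2)) with (u+v-2/(3*b)) by lra. lra.
    + exists (2/(3*b)). split; [lra|]. split; [lra|].
      assert (h1 := SP b a u Hb ltac:(lra) ltac:(lra)).
      assert (h2 := SP b (a+u-2/(3*b)) v Hb ltac:(lra) ltac:(lra)).
      replace (a + u - 2 / (3 * b) + v - 2 / (3 * b)) with (1 - 2*(2/(3*b))) in h2 by lra. lra.
Qed.

Lemma RED b a u v : 0 < b -> 0 <= a -> 0 <= u -> 0 <= v -> a + u + v = 1 ->
  exists t, 0 <= t <= 2/(3*b) /\ t < 1/2 /\ Gam b t <= phi b a + phi b u + phi b v.
Proof.
  intros Hb Ha Hu Hv Hs.
  destruct (Rle_or_lt a u); destruct (Rle_or_lt u v); destruct (Rle_or_lt a v).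
  all: first
    [ destruct (RED_s b a u v Hb) as [t Ht]; [lra|lra|lra|lra|exists t; lra]
    | destruct (RED_s b a v u Hb) as [t Ht]; [lra|lra|lra|lra|exists t; lra]
    | destruct (RED_s b u a v Hb) as [t Ht]; [lra|lra|lra|lra|exists t; lra]
    | destruct (RED_s b u v a Hb) as [t Ht]; [lra|lra|lra|lra|exists t; lra]
    | destruct (RED_s b v a u Hb) as [t Ht]; [lra|lra|lra|lra|exists t; lra]
    | destruct (RED_s b v u a Hb) as [t Ht]; [lra|lra|lra|lra|exists t; lra] ].
Qed.

Lemma G0 b t0 : 0 < b -> 0 < t0 -> exists t, 0 < t <= t0 /\ t <= 1/3 /\ Gam b t <= Gam b 0.
Proof.
  intros Hb Ht0.
  set (e := exp (-(3/2)*b) / 3).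
  assert (He : 0 < e) by (unfold e; apply Rdiv_lt_0_compat; [apply exp_pos|lra]).
  set (t := Rmin t0 (Rmin (1/3) e)).
  assert (Htp : 0 < t) by (unfold t; repeat apply Rmin_pos; lra).
  assert (Ht1 : t <= t0) by (unfold t; apply Rmin_l).
  assert (Ht2 : t <= 1/3) by (unfold t; eapply Rle_trans; [apply Rmin_r|apply Rmin_l]).
  assert (Ht3 : t <= e) by (unfold t; eapply Rle_trans; [apply Rmin_r|apply Rmin_r]).
  exists t. split; [lra|]. split; [lra|].
  unfold Gam. rewrite phi_0. replace (1-2*0) with 1 by ring.
  unfold phi. rewrite !plogp_pos by lra.
  set (w := 1 - 2*t).
  assert (Hl3 : 0 < ln 3) by (rewrite <- ln_1; apply ln_increasing; lra).
  assert (Hw1 : ln (3*w) <= ln 3) by (apply ln_le; unfold w; lra).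
  assert (Hw2 : 0 <= ln (3*w)) by (rewrite <- ln_1; apply ln_le; unfold w; lra).
  assert (Hwl : w * ln (3*w) <= 1 * ln 3) by (apply Rmult_le_compat; unfold w in *; lra).
  assert (Htl : ln (3*t) <= -(3/2)*b).
  { rewrite <- (ln_exp (-(3/2)*b)). apply ln_le; [lra|]. unfold e in Ht3. lra. }
  assert (Htl2 : t * (3*b) <= - 2 * (t * ln (3*t))) by nra.
  assert (Hib : 0 < / b) by (apply Rinv_0_lt_compat; auto).
  assert (Hk : /b * (t*(3*b)) <= /b * (-2*(t*ln (3*t)))) by (apply Rmult_le_compat_l; lra).
  replace (/b * (t*(3*b))) with (3*t) in Hk by (field; lra).
  assert (Hk2 : /b * (w * ln (3*w)) <= /b * (1 * ln 3)) by (apply Rmult_le_compat_l; lra).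
  replace (3*1) with 3 in * by ring. unfold w in *. nra.
Qed.

Lemma ln2_lt : ln 2 < 3/4.
Proof.
  assert (h : ln 2 < ln ((9/8)^6)) by (apply ln_increasing; simpl; lra).
  rewrite ln_pow in h by lra.
  assert (ln (9/8) <= 9/8 - 1) by (apply ln_le_lin; lra).
  simpl in h. lra.
Qed.

Lemma f0_third : f0 (1/3) = 2.
Proof. unfold f0. destruct (Req_EM_T (1/3) (1/3)); [auto|lra]. Qed.

Lemma f0_quarter : f0 (1/4) < 2.
Proof.
  unfold f0. destruct (Req_EM_T (1/4) (1/3)); [lra|].
  replace ((1-2*(1/4))/(1/4)) with 2 by field.
  replace (2 / (3 * (1 - 3 * (1 / 4)))) with (8/3) by field.
  generalize ln2_lt; lra.
Qed.

Lemma f0_K b t : 0 < t < 1/2 -> t <> 1/3 -> f0 t - b = 2/3 * K b t / (1 - 3*t).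
Proof.
  intros Ht Hn. unfold f0, K. destruct (Req_EM_T t (1/3)); [contradiction|].
  rewrite ln_div by lra. field. intro; apply Hn; lra.
Qed.

Lemma f0_eq_K b t : 0 < t < 1/2 -> t <> 1/3 -> (f0 t = b <-> K b t = 0).
Proof.
  intros Ht Hn. generalize (f0_K b t Ht Hn). intro E.
  assert (1 - 3*t <> 0) by (intro; apply Hn; lra).
  split; intro H'.
  - rewrite H' in E. replace (b-b) with 0 in E by ring.
    symmetry in E. unfold Rdiv in E. apply Rmult_integral in E. destruct E as [E|E].
    + apply Rmult_integral in E. destruct E; [lra|auto].
    + exfalso. apply Rinv_neq_0_compat in H. auto.
  - rewrite H' in E. replace (2/3*0/(1-3*t)) with 0 in E by (field; auto). lra.
Qed.

Lemma f0_K_mul b t : 0 < t < 1/2 -> t <> 1/3 -> (f0 t - b) * (1 - 3*t) = 2/3 * K b t.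
Proof.
  intros Ht Hn. rewrite f0_K by auto. field. intro; apply Hn; lra.
Qed.

Lemma K_third b : K b (1/3) = 0.
Proof. unfold K. replace (1 - 2*(1/3)) with (1/3) by field. field. Qed.

Lemma sympts_int a c t : 0 < t < 1/2 -> sympts a c t -> in_int_Xi a c.
Proof.
  intros Ht [E|[E|E]]; injection E; intros; subst; unfold in_int_Xi; lra.
Qed.

Lemma det_sym b a c t : 0 < b -> 0 < t < 1/2 -> sympts a c t ->
  hess_det b a c = phi2 b t * (phi2 b t + 2 * phi2 b (1-2*t)).
Proof.
  intros Hb Ht Hs. assert (HX := sympts_int a c t Ht Hs).
  unfold hess_det. destruct (hess_eqs b a c ltac:(lra) HX) as [e1 [e2 [e3 e4]]].
  rewrite e1, e2, e3, e4.
  destruct Hs as [E|[E|E]]; injection E; intros; subst.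
  - replace (1-t-t) with (1-2*t) by ring. ring.
  - replace (1-(1-2*t)-t) with t by ring. ring.
  - replace (1-t-(1-2*t)) with t by ring. ring.
Qed.

Lemma phi2_comb b t : 0 < b -> 0 < t < 1/2 ->
  phi2 b t + 2 * phi2 b (1-2*t) = - (9*b*t*(1-2*t) - 2) / (2*b*t*(1-2*t)).
Proof. intros Hb Ht. unfold phi2. field. split; [lra|split; lra]. Qed.

Lemma eig_lemma h11 h12 h21 h22 : h11*h22 - h12*h21 < 0 ->
  exists l1 l2, 0 < l1 /\ l2 < 0 /\
    (h11 - l1)*(h22 - l1) - h12*h21 = 0 /\ (h11 - l2)*(h22 - l2) - h12*h21 = 0.
Proof.
  intros Hd. set (tr := h11 + h22). set (D := tr*tr - 4*(h11*h22 - h12*h21)).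
  assert (HD : 0 <= D) by (unfold D; nra).
  assert (Hs := sqrt_sqrt D HD). assert (Hs0 := sqrt_pos D).
  assert (Htt : tr * tr < sqrt D * sqrt D) by (rewrite Hs; unfold D; lra).
  assert (Hgt : - sqrt D < tr < sqrt D) by (split; nra).
  exists ((tr + sqrt D)/2), ((tr - sqrt D)/2). split; [lra|]. split; [lra|].
  split.
  - replace ((h11 - (tr + sqrt D) / 2) * (h22 - (tr + sqrt D) / 2) - h12 * h21)
      with ((sqrt D * sqrt D - D)/4) by (unfold D, tr; field). rewrite Hs. field.
  - replace ((h11 - (tr - sqrt D) / 2) * (h22 - (tr - sqrt D) / 2) - h12 * h21)
      with ((sqrt D * sqrt D - D)/4) by (unfold D, tr; field). rewrite Hs. field.
Qed.

Lemma saddle_sym b a c t : 0 < b -> 0 < t < 1/2 -> sympts a c t -> K b t = 0 ->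
  0 < phi2 b t * (9*b*t*(1-2*t) - 2) -> saddle b a c.
Proof.
  intros Hb Ht Hs HK Hp. split.
  - apply (proj2 (crit_char b a c Hb (sympts_int a c t Ht Hs))). exists t; auto.
  - unfold hess_eigenvalue. apply eig_lemma. fold (hess_det b a c).
    rewrite (det_sym b a c t) by auto. rewrite phi2_comb by auto.
    assert (0 < 2*b*t*(1-2*t)) by (apply Rmult_lt_0_compat; [apply Rmult_lt_0_compat|]; lra).
    replace (phi2 b t * (- (9 * b * t * (1 - 2 * t) - 2) / (2 * b * t * (1 - 2 * t))))
      with (- (phi2 b t * (9 * b * t * (1 - 2 * t) - 2)) / (2 * b * t * (1 - 2 * t))) by (field; lra).
    apply Rdiv_neg_pos; lra.
Qed.

Lemma sq_lt_abs u e : 0 < e -> u^2 < e^2 -> -e < u < e.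
Proof. intros He H. split; nra. Qed.

Lemma dist_bound y1 y2 a c d : 0 < d -> (y1 - a)^2 + (y2 - c)^2 < d^2 ->
  -d < y1 - a < d /\ -d < y2 - c < d.
Proof.
  intros Hd H. assert (h1 := pow2_ge_0 (y1 - a)). assert (h2 := pow2_ge_0 (y2 - c)).
  split; apply sq_lt_abs; auto; lra.
Qed.

Lemma LM b ts d : 0 < b -> 0 < d -> 0 < ts - d -> ts + d <= 2/(3*b) -> ts + d < 1/2 ->
  (forall t, ts - d < t < ts + d -> Gam b ts <= Gam b t) ->
  local_min b ts ts /\ local_min b (1-2*ts) ts /\ local_min b ts (1-2*ts).
Proof.
  intros Hb Hd H1 H2 H3 HG.
  split; [|split]; exists d; split; auto; intros y1 y2 [Hy1 [Hy2 Hy]] Hdist;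
    destruct (dist_bound _ _ _ _ _ Hd Hdist) as [h1 h2]; rewrite (F_eq b y1 y2).
  - rewrite F_tt. assert (HM := MC b y1 y2 Hb Hy1 Hy2 ltac:(lra)).
    specialize (HG ((y1+y2)/2) ltac:(lra)).
    assert (Gam b ((y1+y2)/2) = 2*phi b ((y1+y2)/2) + phi b (1-y1-y2)) by (unfold Gam; do 2 f_equal; field). lra.
  - rewrite F_st. assert (HM := MC b (1-y1-y2) y2 Hb ltac:(lra) Hy2 ltac:(lra)).
    specialize (HG (((1-y1-y2)+y2)/2) ltac:(lra)).
    assert (Gam b (((1-y1-y2)+y2)/2) = 2*phi b (((1-y1-y2)+y2)/2) + phi b y1) by (unfold Gam; do 2 f_equal; field). lra.
  - rewrite F_ts. assert (HM := MC b (1-y1-y2) y1 Hb ltac:(lra) Hy1 ltac:(lra)).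
    specialize (HG (((1-y1-y2)+y1)/2) ltac:(lra)).
    assert (Gam b (((1-y1-y2)+y1)/2) = 2*phi b (((1-y1-y2)+y1)/2) + phi b y2) by (unfold Gam; do 2 f_equal; field). lra.
Qed.

Lemma GMgen b ts : 0 < b ->
  (forall t, 0 < t <= 2/(3*b) -> t < 1/2 -> Gam b ts <= Gam b t) ->
  forall y1 y2, in_Xi y1 y2 -> 1/4 + Gam b ts <= F b y1 y2.
Proof.
  intros Hb HG y1 y2 [H1 [H2 H3]]. rewrite F_eq.
  destruct (RED b (1-y1-y2) y1 y2 Hb ltac:(lra) H1 H2 ltac:(ring)) as [t [Ht1 [Ht2 Ht3]]].
  cut (Gam b ts <= Gam b t); [lra|].
  destruct (Req_dec t 0) as [E|E].
  - subst. destruct (G0 b (2/(3*b)) Hb (xm_pos b Hb)) as [t' [h1 [h2 h3]]].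
    specialize (HG t' ltac:(lra) ltac:(lra)). lra.
  - apply HG; lra.
Qed.

Lemma roots3_s b z1 z2 z3 r : 0 < z1 -> z1 < z2 -> z2 < z3 -> z3 < 1/2 ->
  K b z1 = 0 -> K b z2 = 0 -> K b z3 = 0 -> (r = z1 \/ r = z2 \/ r = z3) -> Kroot b r -> False.
Proof.
  intros h1 h2 h3 h4 k1 k2 k3 Hr Kr.
  destruct (rolleK b z1 z2) as [c1 [Hc1 R1]]; try lra.
  destruct (rolleK b z2 z3) as [c2 [Hc2 R2]]; try lra.
  destruct (Kroot_sum b c1 c2 R1 R2 ltac:(lra)) as [S1 _].
  destruct (Kroot_sum b c1 r R1 Kr ltac:(lra)) as [S2 _].
  lra.
Qed.

Lemma roots3 b z1 z2 z3 : 0 < z1 < 1/2 -> 0 < z2 < 1/2 -> 0 < z3 < 1/2 ->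
  z1 <> z2 -> z2 <> z3 -> z1 <> z3 ->
  K b z1 = 0 -> K b z2 = 0 -> K b z3 = 0 -> Kroot b z1 -> False.
Proof.
  intros h1 h2 h3 n1 n2 n3 k1 k2 k3 Kr.
  destruct (Rtotal_order z1 z2) as [a|[a|a]]; [|contradiction|];
  destruct (Rtotal_order z2 z3) as [b'|[b'|b']]; try contradiction;
  destruct (Rtotal_order z1 z3) as [c|[c|c]]; try contradiction;
  first
   [ apply (roots3_s b z1 z2 z3 z1); auto; lra
   | apply (roots3_s b z1 z3 z2 z1); auto; lra
   | apply (roots3_s b z2 z1 z3 z1); auto; lra
   | apply (roots3_s b z2 z3 z1 z1); auto; lra
   | apply (roots3_s b z3 z1 z2 z1); auto; lra
   | apply (roots3_s b z3 z2 z1 z1); auto; lra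
   | lra ].
Qed.

Lemma roots4_s b z1 z2 z3 z4 : 0 < z1 -> z1 < z2 -> z2 < z3 -> z3 < z4 -> z4 < 1/2 ->
  K b z1 = 0 -> K b z2 = 0 -> K b z3 = 0 -> K b z4 = 0 -> False.
Proof.
  intros h1 h2 h3 h4 h5 k1 k2 k3 k4.
  destruct (rolleK b z1 z2) as [c1 [Hc1 R1]]; try lra.
  destruct (rolleK b z2 z3) as [c2 [Hc2 R2]]; try lra.
  destruct (rolleK b z3 z4) as [c3 [Hc3 R3]]; try lra.
  destruct (Kroot_sum b c1 c2 R1 R2 ltac:(lra)) as [S1 _].
  destruct (Kroot_sum b c1 c3 R1 R3 ltac:(lra)) as [S2 _].
  lra.
Qed.

Lemma roots4 b z1 z2 z3 z4 : 0 < z1 < 1/2 -> 0 < z2 < 1/2 -> 0 < z3 < 1/2 -> 0 < z4 < 1/2 ->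
  z1 <> z2 -> z1 <> z3 -> z1 <> z4 -> z2 <> z3 -> z2 <> z4 -> z3 <> z4 ->
  K b z1 = 0 -> K b z2 = 0 -> K b z3 = 0 -> K b z4 = 0 -> False.
Proof.
  intros h1 h2 h3 h4 n12 n13 n14 n23 n24 n34 k1 k2 k3 k4.
  destruct (Rtotal_order z1 z2) as [a12|[a12|a12]]; try contradiction;
  destruct (Rtotal_order z1 z3) as [a13|[a13|a13]]; try contradiction;
  destruct (Rtotal_order z1 z4) as [a14|[a14|a14]]; try contradiction;
  destruct (Rtotal_order z2 z3) as [a23|[a23|a23]]; try contradiction;
  destruct (Rtotal_order z2 z4) as [a24|[a24|a24]]; try contradiction;
  destruct (Rtotal_order z3 z4) as [a34|[a34|a34]]; try contradiction;
  first [ solve [apply (roots4_s b z1 z2 z3 z4); auto; lra]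
   | solve [apply (roots4_s b z1 z2 z4 z3); auto; lra]
   | solve [apply (roots4_s b z1 z3 z2 z4); auto; lra]
   | solve [apply (roots4_s b z1 z3 z4 z2); auto; lra]
   | solve [apply (roots4_s b z1 z4 z2 z3); auto; lra]
   | solve [apply (roots4_s b z1 z4 z3 z2); auto; lra]
   | solve [apply (roots4_s b z2 z1 z3 z4); auto; lra]
   | solve [apply (roots4_s b z2 z1 z4 z3); auto; lra]
   | solve [apply (roots4_s b z2 z3 z1 z4); auto; lra]
   | solve [apply (roots4_s b z2 z3 z4 z1); auto; lra]
   | solve [apply (roots4_s b z2 z4 z1 z3); auto; lra]
   | solve [apply (roots4_s b z2 z4 z3 z1); auto; lra]
   | solve [apply (roots4_s b z3 z1 z2 z4); auto; lra]
   | solve [apply (roots4_s b z3 z1 z4 z2); auto; lra]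
   | solve [apply (roots4_s b z3 z2 z1 z4); auto; lra]
   | solve [apply (roots4_s b z3 z2 z4 z1); auto; lra]
   | solve [apply (roots4_s b z3 z4 z1 z2); auto; lra]
   | solve [apply (roots4_s b z3 z4 z2 z1); auto; lra]
   | solve [apply (roots4_s b z4 z1 z2 z3); auto; lra]
   | solve [apply (roots4_s b z4 z1 z3 z2); auto; lra]
   | solve [apply (roots4_s b z4 z2 z1 z3); auto; lra]
   | solve [apply (roots4_s b z4 z2 z3 z1); auto; lra]
   | solve [apply (roots4_s b z4 z3 z1 z2); auto; lra]
   | solve [apply (roots4_s b z4 z3 z2 z1); auto; lra] | lra ].
Qed.

Section KF.
Variables (b c1 c2 : R).
Hypotheses (Hb : 0 < b) (R1 : Kroot b c1) (R2 : Kroot b c2) (Hc : c1 < c2).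

Lemma kf_left t : t <= c1 -> 9*b*t*(1-2*t) - 2 <= 0.
Proof. intros. rewrite (Kfact b c1 c2 t R1 R2 ltac:(lra)). assert (0 <= b*(c1-t)*(c2-t)) by (apply Rmult_le_pos; [apply Rmult_le_pos|]; lra). nra. Qed.
Lemma kf_left_s t : t < c1 -> 9*b*t*(1-2*t) - 2 < 0.
Proof. intros. rewrite (Kfact b c1 c2 t R1 R2 ltac:(lra)). assert (0 < b*(c1-t)*(c2-t)) by (apply Rmult_lt_0_compat; [apply Rmult_lt_0_compat|]; lra). nra. Qed.
Lemma kf_mid t : c1 <= t <= c2 -> 0 <= 9*b*t*(1-2*t) - 2.
Proof. intros. rewrite (Kfact b c1 c2 t R1 R2 ltac:(lra)). assert (0 <= b*(t-c1)*(c2-t)) by (apply Rmult_le_pos; [apply Rmult_le_pos|]; lra). nra. Qed.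
Lemma kf_mid_s t : c1 < t < c2 -> 0 < 9*b*t*(1-2*t) - 2.
Proof. intros. rewrite (Kfact b c1 c2 t R1 R2 ltac:(lra)). assert (0 < b*(t-c1)*(c2-t)) by (apply Rmult_lt_0_compat; [apply Rmult_lt_0_compat|]; lra). nra. Qed.
Lemma kf_right t : c2 <= t -> 9*b*t*(1-2*t) - 2 <= 0.
Proof. intros. rewrite (Kfact b c1 c2 t R1 R2 ltac:(lra)). assert (0 <= b*(t-c1)*(t-c2)) by (apply Rmult_le_pos; [apply Rmult_le_pos|]; lra). nra. Qed.
Lemma kf_right_s t : c2 < t -> 9*b*t*(1-2*t) - 2 < 0.
Proof. intros. rewrite (Kfact b c1 c2 t R1 R2 ltac:(lra)). assert (0 < b*(t-c1)*(t-c2)) by (apply Rmult_lt_0_compat; [apply Rmult_lt_0_compat|]; lra). nra. Qed.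

Lemma Kleft_pos p t : 0 < t <= p -> p < c1 -> c2 < 1/2 -> K b p = 0 -> 0 <= K b t.
Proof. intros. rewrite <- H2. apply K_ge; try lra. intros; apply kf_left; lra. Qed.
Lemma Kleft_neg p t : 0 < p -> p <= t <= c1 -> c2 < 1/2 -> K b p = 0 -> K b t <= 0.
Proof. intros. rewrite <- H2. apply K_ge; try lra. intros; apply kf_left; lra. Qed.
Lemma Kmid_neg z t : 0 < c1 -> c1 <= t <= z -> z <= c2 -> c2 < 1/2 -> K b z = 0 -> K b t <= 0.
Proof. intros. rewrite <- H3. apply K_le; try lra. intros; apply kf_mid; lra. Qed.
Lemma Kmid_pos z t : 0 < c1 -> c1 <= z <= t -> t <= c2 -> c2 < 1/2 -> K b z = 0 -> 0 <= K b t.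
Proof. intros. rewrite <- H3. apply K_le; try lra. intros; apply kf_mid; lra. Qed.
Lemma Kright_pos z t : 0 < c1 -> c2 <= t <= z -> z < 1/2 -> K b z = 0 -> 0 <= K b t.
Proof. intros. rewrite <- H2. apply K_ge; try lra. intros; apply kf_right; lra. Qed.
Lemma Kright_neg z t : 0 < c1 -> c2 <= z -> z <= t < 1/2 -> K b z = 0 -> K b t <= 0.
Proof. intros. rewrite <- H2. apply K_ge; try lra. intros; apply kf_right; lra. Qed.

Lemma Kmid_pos_s z t : 0 < c1 -> c1 <= z < t -> t < c2 -> c2 < 1/2 -> K b z = 0 -> 0 < K b t.
Proof.
  intros. assert (h1 : K b z <= K b ((z+t)/2)) by (apply K_le; try lra; intros; apply kf_mid; lra).
  assert (h2 : K b ((z+t)/2) < K b t) by (apply K_lt; try lra; intros; apply kf_mid_s; lra). lra.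
Qed.
Lemma Kmid_neg_s z t : 0 < c1 -> c1 < t < z -> z <= c2 -> c2 < 1/2 -> K b z = 0 -> K b t < 0.
Proof.
  intros. assert (h1 : K b ((t+z)/2) <= K b z) by (apply K_le; try lra; intros; apply kf_mid; lra).
  assert (h2 : K b t < K b ((t+z)/2)) by (apply K_lt; try lra; intros; apply kf_mid_s; lra). lra.
Qed.

Lemma LocMinLeft p : 0 < p < c1 -> c2 < 1/2 -> K b p = 0 ->
  forall t, 0 < t <= c1 -> Gam b p <= Gam b t.
Proof.
  intros Hp Hc2 HK t Ht. destruct (Rle_or_lt t p).
  - apply Gam_dec; try lra. intros s Hs. apply (Kleft_pos p); lra.
  - apply Gam_inc; try lra. intros s Hs. apply (Kleft_neg p); lra.
Qed.

Lemma LocMinRight z : 0 < c1 -> c2 < z < 1/2 -> K b z = 0 ->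
  forall t, c2 <= t < 1/2 -> Gam b z <= Gam b t.
Proof.
  intros Hc1 Hz HK t Ht. destruct (Rle_or_lt t z).
  - apply Gam_dec; try lra. intros s Hs. apply (Kright_pos z); lra.
  - apply Gam_inc; try lra. intros s Hs. apply (Kright_neg z); lra.
Qed.
End KF.

Lemma LMd b ts lo hi : 0 < b -> lo < ts < hi -> 0 < lo -> hi < 1/2 -> ts < 2/(3*b) ->
  (forall t, lo < t < hi -> Gam b ts <= Gam b t) ->
  local_min b ts ts /\ local_min b (1-2*ts) ts /\ local_min b ts (1-2*ts).
Proof.
  intros Hb Hts Hlo Hhi Hxm HG.
  set (d := Rmin (Rmin (ts - lo) (hi - ts)) (2/(3*b) - ts)).
  assert (Hd1 : d <= ts - lo) by (unfold d; eapply Rle_trans; [apply Rmin_l|apply Rmin_l]).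
  assert (Hd2 : d <= hi - ts) by (unfold d; eapply Rle_trans; [apply Rmin_l|apply Rmin_r]).
  assert (Hd3 : d <= 2/(3*b) - ts) by (unfold d; apply Rmin_r).
  assert (Hd0 : 0 < d) by (unfold d; repeat apply Rmin_pos; lra).
  apply (LM b ts d); auto; try lra.
  intros t Ht. apply HG. lra.
Qed.

Lemma NLM b a c : (forall e, 0 < e -> exists y1 y2, in_Xi y1 y2 /\ (y1 - a)^2 + (y2 - c)^2 < e^2 /\ F b y1 y2 < F b a c) ->
  ~ local_min b a c.
Proof.
  intros H [e [He Hm]]. destruct (H e He) as [y1 [y2 [Hy [Hd HF]]]].
  specialize (Hm y1 y2 Hy Hd). lra.
Qed.

Lemma not_lmin_sym b ts : 0 < ts < 1/2 ->
  (forall e, 0 < e -> exists t, 0 < t < 1/2 /\ Rabs (t - ts) < e/3 /\ Gam b t < Gam b ts) ->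
  ~ local_min b ts ts /\ ~ local_min b (1-2*ts) ts /\ ~ local_min b ts (1-2*ts).
Proof.
  intros Hts H. split; [|split]; apply NLM; intros e He; destruct (H e He) as [t [Ht [Hd HG]]];
  apply Rabs_def2 in Hd.
  - exists t, t. split; [unfold in_Xi; lra|]. split; [nra|]. rewrite !F_tt. lra.
  - exists (1-2*t), t. split; [unfold in_Xi; lra|]. split; [nra|]. rewrite !F_st. lra.
  - exists t, (1-2*t). split; [unfold in_Xi; lra|]. split; [nra|]. rewrite !F_ts. lra.
Qed.

Lemma local_max_center b : 2 < b -> local_max b (1/3) (1/3).
Proof.
  intros Hb. assert (Hb0 : 0 < b) by lra.
  assert (Hxm : 2/(3*b) < 1/3).
  { apply (Rmult_lt_reg_r (3*b)); [lra|]. replace (2/(3*b)*(3*b)) with 2 by (field; lra). lra. }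
  assert (Hx0 := xm_pos b Hb0).
  exists ((1/3 - 2/(3*b))/2). split; [lra|]. intros y1 y2 [H1 [H2 H3]] Hd.
  apply dist_bound in Hd; [|lra]. destruct Hd as [d1 d2].
  rewrite F_eq, F_tt. unfold Gam.
  assert (c1 := CT b (1/3) y1 Hb0 ltac:(lra) ltac:(lra)).
  assert (c2 := CT b (1/3) y2 Hb0 ltac:(lra) ltac:(lra)).
  assert (c0 := CT b (1/3) (1-y1-y2) Hb0 ltac:(lra) ltac:(lra)).
  replace (1 - 2*(1/3)) with (1/3) by field.
  assert (E : phi1 b (1/3) * (y1 - 1/3) + phi1 b (1/3) * (y2 - 1/3) + phi1 b (1/3) * (1-y1-y2 - 1/3) = 0) by field.
  lra.
Qed.

Lemma crit_at b a c t : 0 < b -> 0 < t < 1/2 -> K b t = 0 -> sympts a c t -> critical b a c.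
Proof.
  intros Hb Ht HK Hs. apply (proj2 (crit_char b a c Hb (sympts_int a c t Ht Hs))). exists t; auto.
Qed.

Lemma sympts_third a c : sympts a c (1/3) -> (a, c) = (1/3, 1/3).
Proof.
  intros [E|[E|E]]; rewrite E; f_equal; field.
Qed.

Section M0.
Variable m0 : R.
Hypothesis Hm0 : 0 < m0 < 1/2.
Hypothesis Hmin : forall t, 0 < t < 1/2 -> f0 m0 <= f0 t.

Lemma Ksign_pos b t : b <= f0 m0 -> 0 < t <= 1/3 -> 0 <= K b t.
Proof.
  intros Hb Ht. destruct (Req_dec t (1/3)) as [E|E]. { rewrite E, K_third; lra. }
  assert (h := f0_K_mul b t ltac:(lra) E). assert (h2 := Hmin t ltac:(lra)).
  assert (0 <= (f0 t - b) * (1 - 3*t)) by (apply Rmult_le_pos; lra). lra.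
Qed.
Lemma Ksign_neg b t : b <= f0 m0 -> 1/3 <= t < 1/2 -> K b t <= 0.
Proof.
  intros Hb Ht. destruct (Req_dec t (1/3)) as [E|E]. { rewrite E, K_third; lra. }
  assert (h := f0_K_mul b t ltac:(lra) E). assert (h2 := Hmin t ltac:(lra)).
  assert (0 <= (f0 t - b) * (3*t - 1)) by (apply Rmult_le_pos; lra). lra.
Qed.

Lemma B3_lt2 : f0 m0 < 2.
Proof. generalize (Hmin (1/4) ltac:(lra)) f0_quarter. lra. Qed.

Lemma m0_ne : m0 <> 1/3.
Proof. intro E. generalize B3_lt2. rewrite E, f0_third. lra. Qed.

Lemma K_m0 : K (f0 m0) m0 = 0.
Proof. apply (proj1 (f0_eq_K (f0 m0) m0 Hm0 m0_ne)). reflexivity. Qed.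

Lemma m0_lt : m0 < 1/3.
Proof.
  destruct (Rlt_or_le m0 (1/3)) as [h|h]; auto. exfalso.
  assert (h' : 1/3 < m0) by (generalize m0_ne; lra).
  set (B := f0 m0).
  assert (Hd : - Kd B m0 = 0).
  { apply (fermat_min (fun x => - K B x) (- Kd B m0) (1/3) (1/2) m0); [lra| |].
    - apply isd_opp, K_deriv. lra.
    - intros x Hx. assert (K B x <= 0) by (apply Ksign_neg; unfold B; lra).
      unfold B in *; rewrite K_m0. lra. }
  assert (R0 : Kroot B m0) by (apply Kd_zero; lra).
  destruct (rolleK B (1/3) m0) as [c [Hc Rc]]; try lra.
  { rewrite K_third. unfold B; rewrite K_m0. auto. }
  destruct (Kroot_sum B c m0 Rc R0 ltac:(lra)). lra.
Qed.

Lemma B3_pos : 0 < f0 m0.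
Proof.
  assert (h := m0_lt). unfold f0. destruct (Req_EM_T m0 (1/3)); [lra|].
  apply Rmult_lt_0_compat. apply Rdiv_lt_0_compat; lra.
  rewrite <- ln_1. apply ln_increasing; [lra|].
  apply (Rmult_lt_reg_r m0); [lra|]. field_simplify; lra.
Qed.

Lemma Kroot_m0 : Kroot (f0 m0) m0.
Proof.
  assert (h := m0_lt). apply Kd_zero; [lra|].
  apply (fermat_min (K (f0 m0)) (Kd (f0 m0) m0) 0 (1/3) m0); [lra| |].
  - apply K_deriv. lra.
  - intros x Hx. rewrite K_m0. apply Ksign_pos; lra.
Qed.

Lemma center_global b : 0 < b <= f0 m0 -> global_min b (1/3) (1/3).
Proof.
  intros Hb y1 y2 Hy. rewrite F_tt. apply GMgen; [lra| |auto].
  intros t Ht Ht2. destruct (Rle_or_lt t (1/3)).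
  - apply Gam_dec; try lra. intros s Hs. apply Ksign_pos; lra.
  - apply Gam_inc; try lra. intros s Hs. apply Ksign_neg; lra.
Qed.

Lemma part1 b : 0 < b < f0 m0 ->
  (forall x1 x2, in_int_Xi x1 x2 -> (critical b x1 x2 <-> (x1, x2) = (1/3, 1/3))) /\
  global_min b (1/3) (1/3).
Proof.
  intros Hb. split; [|apply center_global; lra].
  intros x1 x2 HX. rewrite (crit_char b x1 x2 ltac:(lra) HX). split.
  - intros [t [Ht [HK Hs]]].
    destruct (Req_dec t (1/3)) as [E|E].
    + subst. apply sympts_third; auto.
    + exfalso. apply (proj2 (f0_eq_K b t Ht E)) in HK. generalize (Hmin t Ht). lra.
  - intros E. exists (1/3). split; [lra|]. split; [apply K_third|]. left. rewrite E. reflexivity.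
Qed.

Lemma part2 :
   (forall x1 x2, in_int_Xi x1 x2 ->
      (critical (f0 m0) x1 x2 <->
         (x1, x2) = (m0, m0) \/ (x1, x2) = (1 - 2 * m0, m0) \/
         (x1, x2) = (m0, 1 - 2 * m0) \/ (x1, x2) = (1/3, 1/3))) /\
   (degenerate_critical (f0 m0) m0 m0 /\ ~ local_min (f0 m0) m0 m0) /\
   (degenerate_critical (f0 m0) (1 - 2 * m0) m0 /\ ~ local_min (f0 m0) (1 - 2 * m0) m0) /\
   (degenerate_critical (f0 m0) m0 (1 - 2 * m0) /\ ~ local_min (f0 m0) m0 (1 - 2 * m0)) /\
   global_min (f0 m0) (1/3) (1/3).
Proof.
  assert (Hl := m0_lt). assert (Hp := B3_pos). assert (HK := K_m0). assert (HR := Kroot_m0).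
  set (B := f0 m0) in *.
  assert (Hdeg : forall a c, sympts a c m0 -> degenerate_critical B a c).
  { intros a c Hs. split. apply (crit_at B a c m0); auto; lra.
    rewrite (det_sym B a c m0) by (auto; lra). rewrite phi2_comb by lra.
    unfold Kroot in HR. rewrite HR. unfold Rdiv. ring. }
  destruct (rolleK B m0 (1/3)) as [c [Hc Rc]]; try lra. { rewrite K_third; auto. }
  assert (HN : ~ local_min B m0 m0 /\ ~ local_min B (1-2*m0) m0 /\ ~ local_min B m0 (1-2*m0)).
  { apply not_lmin_sym; [lra|]. intros e He.
    set (t := m0 + Rmin (e/6) ((c-m0)/2)).
    assert (h1 : 0 < Rmin (e/6) ((c-m0)/2)) by (apply Rmin_pos; lra).
    assert (h2 : Rmin (e/6) ((c-m0)/2) <= e/6) by apply Rmin_l.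
    assert (h3 : Rmin (e/6) ((c-m0)/2) <= (c-m0)/2) by apply Rmin_r.
    exists t. split; [unfold t; lra|]. split.
    { unfold t. rewrite Rabs_pos_eq by lra. lra. }
    set (s := (m0 + t)/2).
    assert (g1 : Gam B s <= Gam B m0).
    { apply Gam_dec; try (unfold s, t; lra). intros x Hx.
      apply (Kmid_pos B m0 c) with (z := m0); auto; unfold s, t in *; lra. }
    assert (g2 : Gam B t < Gam B s).
    { apply Gam_decs; try (unfold s, t; lra). intros x Hx.
      apply (Kmid_pos_s B m0 c) with (z := m0); auto; unfold s, t in *; lra. }
    lra. }
  destruct HN as [N1 [N2 N3]].
  split; [|split; [|split; [|split]]].
  - intros x1 x2 HX. rewrite (crit_char B x1 x2 Hp HX). split.
    + intros [t [Ht [HKt Hs]]].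
      destruct (Req_dec t m0) as [E|E]; [subst t; destruct Hs as [h|[h|h]]; auto|].
      destruct (Req_dec t (1/3)) as [E'|E']; [subst t; right; right; right; apply sympts_third; auto|].
      exfalso. apply (roots3 B m0 t (1/3)); try lra; try (intro HH; first [apply E; lra | apply E'; lra | lra]); auto; apply K_third.
    + intros [E|[E|[E|E]]].
      * exists m0. split; [lra|]. split; auto. left; auto.
      * exists m0. split; [lra|]. split; auto. right; left; auto.
      * exists m0. split; [lra|]. split; auto. right; right; auto.
      * exists (1/3). split; [lra|]. split; [apply K_third|]. left. rewrite E. reflexivity.
  - split; auto. apply Hdeg. left; auto.
  - split; auto. apply Hdeg. right; left; auto.
  - split; auto. apply Hdeg. right; right; auto.
  - apply center_global. unfold B in *; lra.
Qed.

End M0.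

Lemma crit7 b p q : 0 < b -> 0 < p < 1/2 -> 0 < q < 1/2 -> p <> q -> p <> 1/3 -> q <> 1/3 ->
  K b p = 0 -> K b q = 0 ->
  forall x1 x2, in_int_Xi x1 x2 ->
        (critical b x1 x2 <->
           (x1, x2) = (p, p) \/ (x1, x2) = (1 - 2 * p, p) \/
           (x1, x2) = (p, 1 - 2 * p) \/ (x1, x2) = (1/3, 1/3) \/
           (x1, x2) = (q, q) \/ (x1, x2) = (1 - 2 * q, q) \/
           (x1, x2) = (q, 1 - 2 * q)).
Proof.
  intros Hb Hp Hq Npq Np Nq Kp Kq x1 x2 HX. rewrite (crit_char b x1 x2 Hb HX). split.
  - intros [t [Ht [HKt Hs]]].
    destruct (Req_dec t p) as [E|E]; [subst t; destruct Hs as [h|[h|h]]; tauto|].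
    destruct (Req_dec t q) as [E2|E2]; [subst t; destruct Hs as [h|[h|h]]; tauto|].
    destruct (Req_dec t (1/3)) as [E3|E3]; [subst t; right; right; right; left; apply sympts_third; auto|].
    exfalso. apply (roots4 b p q (1/3) t); auto; try lra; try apply K_third; auto.
  - intros [E|[E|[E|[E|[E|[E|E]]]]]].
    + exists p. split; [lra|]. split; auto. left; auto.
    + exists p. split; [lra|]. split; auto. right; left; auto.
    + exists p. split; [lra|]. split; auto. right; right; auto.
    + exists (1/3). split; [lra|]. split; [apply K_third|]. left. rewrite E. reflexivity.
    + exists q. split; [lra|]. split; auto. left; auto.
    + exists q. split; [lra|]. split; auto. right; left; auto.
    + exists q. split; [lra|]. split; auto. right; right; auto.
Qed.

Lemma inv_gt b q : 0 < b -> 0 < q -> b * q < 2/3 -> 0 < phi2 b q.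
Proof.
  intros Hb Hq H. unfold phi2.
  assert (3/2 < / (b*q)).
  { replace (3/2) with (/(2/3)) by field. apply Rinv_lt_contravar; [|lra].
    apply Rmult_lt_0_compat; [apply Rmult_lt_0_compat|]; lra. }
  lra.
Qed.
Lemma inv_lt b q : 0 < b -> 0 < q -> 2/3 < b * q -> phi2 b q < 0.
Proof.
  intros Hb Hq H. unfold phi2.
  assert (/ (b*q) < 3/2).
  { replace (3/2) with (/(2/3)) by field. apply Rinv_lt_contravar; [|lra].
    apply Rmult_lt_0_compat; lra. }
  lra.
Qed.

Section M0b.
Variable m0 : R.
Hypothesis Hm0 : 0 < m0 < 1/2.
Hypothesis Hmin : forall t, 0 < t < 1/2 -> f0 m0 <= f0 t.

Lemma part3 beta p q : f0 m0 < beta < 2 ->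
     0 < p < m0 -> m0 < q < 1/2 -> f0 p = beta -> f0 q = beta ->
     (forall x1 x2, in_int_Xi x1 x2 ->
        (critical beta x1 x2 <->
           (x1, x2) = (p, p) \/ (x1, x2) = (1 - 2 * p, p) \/
           (x1, x2) = (p, 1 - 2 * p) \/ (x1, x2) = (1/3, 1/3) \/
           (x1, x2) = (q, q) \/ (x1, x2) = (1 - 2 * q, q) \/
           (x1, x2) = (q, 1 - 2 * q))) /\
     (critical beta p p /\ local_min beta p p) /\
     (critical beta (1 - 2 * p) p /\ local_min beta (1 - 2 * p) p) /\
     (critical beta p (1 - 2 * p) /\ local_min beta p (1 - 2 * p)) /\
     (critical beta (1/3) (1/3) /\ local_min beta (1/3) (1/3)) /\
     saddle beta q q /\ saddle beta (1 - 2 * q) q /\ saddle beta q (1 - 2 * q).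
Proof.
  intros Hb Hp Hq Fp Fq.
  assert (Hl := m0_lt m0 Hm0 Hmin). assert (HB := B3_pos m0 Hm0 Hmin).
  assert (Hb0 : 0 < beta) by lra.
  assert (Np : p <> 1/3) by (intro E; rewrite E, f0_third in Fp; lra).
  assert (Nq : q <> 1/3) by (intro E; rewrite E, f0_third in Fq; lra).
  assert (Kp : K beta p = 0) by (apply (proj1 (f0_eq_K beta p ltac:(lra) Np)); auto).
  assert (Kq : K beta q = 0) by (apply (proj1 (f0_eq_K beta q ltac:(lra) Nq)); auto).
  assert (Kt := K_third beta).
  assert (Hq3 : q < 1/3).
  { destruct (Rlt_or_le q (1/3)) as [h|h]; auto. exfalso.
    destruct (rolleK beta p (1/3)) as [c1 [Hc1 R1]]; try lra.
    destruct (rolleK beta (1/3) q) as [c2 [Hc2 R2]]; try lra.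
    assert (h' := kf_mid_s beta c1 c2 Hb0 R1 R2 ltac:(lra) (1/3) ltac:(lra)). lra. }
  destruct (rolleK beta p q) as [c1 [Hc1 R1]]; try lra.
  destruct (rolleK beta q (1/3)) as [c2 [Hc2 R2]]; try lra.
  assert (Hxm : 1/3 < 2/(3*beta)).
  { apply (Rmult_lt_reg_r (3*beta)); [lra|]. replace (2/(3*beta)*(3*beta)) with 2 by (field; lra). lra. }
  assert (Hcr := crit7 beta p q Hb0 ltac:(lra) ltac:(lra) ltac:(lra) Np Nq Kp Kq).
  assert (LMp : local_min beta p p /\ local_min beta (1-2*p) p /\ local_min beta p (1-2*p)).
  { apply (LMd beta p (p/2) c1); auto; try lra.
    intros t Ht. apply (LocMinLeft beta c1 c2); auto; lra. }
  assert (LMc : local_min beta (1/3) (1/3)).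
  { assert (HG : forall t, c2 < t < 5/12 -> Gam beta (1/3) <= Gam beta t).
    { intros t Ht. apply (LocMinRight beta c1 c2); auto; lra. }
    destruct (LMd beta (1/3) c2 (5/12) Hb0 ltac:(lra) ltac:(lra) ltac:(lra) ltac:(lra) HG) as [h _]. auto. }
  assert (Hsad : forall a c, sympts a c q -> saddle beta a c).
  { intros a c Hs. apply (saddle_sym beta a c q); auto; try lra.
    apply Rmult_lt_0_compat.
    - apply inv_gt; try lra. assert (beta * q < 2 * (1/3)) by (apply Rmult_le_0_lt_compat; lra). lra.
    - apply (kf_mid_s beta c1 c2); auto; lra. }
  destruct LMp as [L1 [L2 L3]].
  split; [auto|]. split; [split; [apply (crit_at beta p p p); auto; [lra|left; auto]|auto]|].
  split; [split; [apply (crit_at beta (1-2*p) p p); auto; [lra|right; left; auto]|auto]|].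
  split; [split; [apply (crit_at beta p (1-2*p) p); auto; [lra|right; right; auto]|auto]|].
  split; [split; [apply (crit_at beta (1/3) (1/3) (1/3)); auto; [lra|left; auto]|auto]|].
  split; [apply Hsad; left; auto|]. split; [apply Hsad; right; left; auto|]. apply Hsad; right; right; auto.
Qed.

End M0b.

Section M0c.
Variable m0 : R.
Hypothesis Hm0 : 0 < m0 < 1/2.
Hypothesis Hmin : forall t, 0 < t < 1/2 -> f0 m0 <= f0 t.

Lemma part4 p : 0 < p < m0 -> f0 p = 2 ->
     (forall x1 x2, in_int_Xi x1 x2 ->
        (critical 2 x1 x2 <->
           (x1, x2) = (p, p) \/ (x1, x2) = (1 - 2 * p, p) \/
           (x1, x2) = (p, 1 - 2 * p) \/ (x1, x2) = (1/3, 1/3))) /\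
     (critical 2 p p /\ local_min 2 p p) /\
     (critical 2 (1 - 2 * p) p /\ local_min 2 (1 - 2 * p) p) /\
     (critical 2 p (1 - 2 * p) /\ local_min 2 p (1 - 2 * p)) /\
     (degenerate_critical 2 (1/3) (1/3) /\ ~ local_min 2 (1/3) (1/3)).
Proof.
  intros Hp Fp.
  assert (Hl := m0_lt m0 Hm0 Hmin).
  assert (Hb0 : 0 < 2) by lra.
  assert (Np : p <> 1/3) by lra.
  assert (Kp : K 2 p = 0) by (apply (proj1 (f0_eq_K 2 p ltac:(lra) Np)); auto).
  assert (Kt := K_third 2).
  assert (R3 : Kroot 2 (1/3)) by (unfold Kroot; field).
  destruct (rolleK 2 p (1/3)) as [c1 [Hc1 R1]]; try lra.
  split; [|split; [|split; [|split]]].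
  - intros x1 x2 HX. rewrite (crit_char 2 x1 x2 Hb0 HX). split.
    + intros [t [Ht [HKt Hs]]].
      destruct (Req_dec t p) as [E|E]; [subst t; destruct Hs as [h|[h|h]]; tauto|].
      destruct (Req_dec t (1/3)) as [E'|E']; [subst t; right; right; right; apply sympts_third; auto|].
      exfalso. apply (roots3 2 (1/3) p t); try lra; try (intro HH; first [apply E; lra | apply E'; lra | lra]); auto.
    + intros [E|[E|[E|E]]].
      * exists p. split; [lra|]. split; auto. left; auto.
      * exists p. split; [lra|]. split; auto. right; left; auto.
      * exists p. split; [lra|]. split; auto. right; right; auto.
      * exists (1/3). split; [lra|]. split; [apply K_third|]. left. rewrite E. reflexivity.
  - split. apply (crit_at 2 p p p); auto; [lra|left; auto].
    apply (LMd 2 p (p/2) c1); auto; try lra.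
    intros t Ht. apply (LocMinLeft 2 c1 (1/3)); auto; lra.
  - split. apply (crit_at 2 (1-2*p) p p); auto; [lra|right; left; auto].
    apply (LMd 2 p (p/2) c1); auto; try lra.
    intros t Ht. apply (LocMinLeft 2 c1 (1/3)); auto; lra.
  - split. apply (crit_at 2 p (1-2*p) p); auto; [lra|right; right; auto].
    apply (LMd 2 p (p/2) c1); auto; try lra.
    intros t Ht. apply (LocMinLeft 2 c1 (1/3)); auto; lra.
  - split.
    + split. apply (crit_at 2 (1/3) (1/3) (1/3)); auto; [lra|left; auto].
      rewrite (det_sym 2 (1/3) (1/3) (1/3)) by (auto; try lra; left; auto).
      unfold phi2. field.
    + assert (H := not_lmin_sym 2 (1/3) ltac:(lra)). destruct H as [H _]; [|exact H].
      intros e He.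
      set (t := 1/3 - Rmin (e/6) ((1/3-c1)/2)).
      assert (h1 : 0 < Rmin (e/6) ((1/3-c1)/2)) by (apply Rmin_pos; lra).
      assert (h2 : Rmin (e/6) ((1/3-c1)/2) <= e/6) by apply Rmin_l.
      assert (h3 : Rmin (e/6) ((1/3-c1)/2) <= (1/3-c1)/2) by apply Rmin_r.
      exists t. split; [unfold t; lra|]. split.
      { unfold t. rewrite Rabs_left by lra. lra. }
      set (s := (t + 1/3)/2).
      assert (g1 : Gam 2 s <= Gam 2 (1/3)).
      { apply Gam_inc; try (unfold s, t; lra). intros x Hx.
        apply (Kmid_neg 2 c1 (1/3)) with (z := 1/3); auto; unfold s, t in *; lra. }
      assert (g2 : Gam 2 t < Gam 2 s).
      { apply Gam_incs; try (unfold s, t; lra). intros x Hx.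
        apply (Kmid_neg_s 2 c1 (1/3)) with (z := 1/3); auto; unfold s, t in *; lra. }
      lra.
Qed.

Lemma part5 beta p q : 2 < beta ->
     0 < p < m0 -> m0 < q < 1/2 -> f0 p = beta -> f0 q = beta ->
     (forall x1 x2, in_int_Xi x1 x2 ->
        (critical beta x1 x2 <->
           (x1, x2) = (p, p) \/ (x1, x2) = (1 - 2 * p, p) \/
           (x1, x2) = (p, 1 - 2 * p) \/ (x1, x2) = (1/3, 1/3) \/
           (x1, x2) = (q, q) \/ (x1, x2) = (1 - 2 * q, q) \/
           (x1, x2) = (q, 1 - 2 * q))) /\
     (critical beta p p /\ global_min beta p p) /\
     (critical beta (1 - 2 * p) p /\ global_min beta (1 - 2 * p) p) /\
     (critical beta p (1 - 2 * p) /\ global_min beta p (1 - 2 * p)) /\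
     saddle beta q q /\ saddle beta (1 - 2 * q) q /\ saddle beta q (1 - 2 * q) /\
     (critical beta (1/3) (1/3) /\ local_max beta (1/3) (1/3)).
Proof.
  intros Hb Hp Hq Fp Fq.
  assert (Hl := m0_lt m0 Hm0 Hmin).
  assert (Hb0 : 0 < beta) by lra.
  assert (Np : p <> 1/3) by (intro E; rewrite E, f0_third in Fp; lra).
  assert (Nq : q <> 1/3) by (intro E; rewrite E, f0_third in Fq; lra).
  assert (Kp : K beta p = 0) by (apply (proj1 (f0_eq_K beta p ltac:(lra) Np)); auto).
  assert (Kq : K beta q = 0) by (apply (proj1 (f0_eq_K beta q ltac:(lra) Nq)); auto).
  assert (Kt := K_third beta).
  assert (Hq3 : 1/3 < q).
  { destruct (Rlt_or_le (1/3) q) as [h|h]; auto. exfalso.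
    assert (q < 1/3) by lra.
    destruct (rolleK beta p q) as [c1 [Hc1 R1]]; try lra.
    destruct (rolleK beta q (1/3)) as [c2 [Hc2 R2]]; try lra.
    assert (h' := kf_right_s beta c1 c2 Hb0 R1 R2 ltac:(lra) (1/3) ltac:(lra)). lra. }
  destruct (rolleK beta p (1/3)) as [c1 [Hc1 R1]]; try lra.
  destruct (rolleK beta (1/3) q) as [c2 [Hc2 R2]]; try lra.
  assert (Hxm : 2/(3*beta) < 1/3).
  { apply (Rmult_lt_reg_r (3*beta)); [lra|]. replace (2/(3*beta)*(3*beta)) with 2 by (field; lra). lra. }
  assert (Hcr := crit7 beta p q Hb0 ltac:(lra) ltac:(lra) ltac:(lra) Np Nq Kp Kq).
  assert (GM : forall y1 y2, in_Xi y1 y2 -> 1/4 + Gam beta p <= F beta y1 y2).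
  { apply GMgen; auto. intros t Ht Ht2. destruct (Rle_or_lt t p).
    - apply Gam_dec; try lra. intros s Hs. apply (Kleft_pos beta c1 c2 Hb0 R1 R2 ltac:(lra) p); auto; lra.
    - apply Gam_inc; try lra. intros s Hs. destruct (Rle_or_lt s c1).
      + apply (Kleft_neg beta c1 c2 Hb0 R1 R2 ltac:(lra) p); auto; lra.
      + apply (Kmid_neg beta c1 c2 Hb0 R1 R2 ltac:(lra) (1/3)); auto; lra. }
  assert (Hsad : forall a c, sympts a c q -> saddle beta a c).
  { intros a c Hs. apply (saddle_sym beta a c q); auto; try lra.
    assert (h1 : phi2 beta q < 0).
    { apply inv_lt; try lra. assert (2 * (1/3) < beta * q) by (apply Rmult_gt_0_lt_compat; lra). lra. }
    assert (h2 := kf_right_s beta c1 c2 Hb0 R1 R2 ltac:(lra) q ltac:(lra)).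
    nra. }
  split; [auto|].
  split; [split; [apply (crit_at beta p p p); auto; [lra|left; auto]|intros y1 y2 Hy; rewrite F_tt; auto]|].
  split; [split; [apply (crit_at beta (1-2*p) p p); auto; [lra|right; left; auto]|intros y1 y2 Hy; rewrite F_st; auto]|].
  split; [split; [apply (crit_at beta p (1-2*p) p); auto; [lra|right; right; auto]|intros y1 y2 Hy; rewrite F_ts; auto]|].
  split; [apply Hsad; left; auto|]. split; [apply Hsad; right; left; auto|].
  split; [apply Hsad; right; right; auto|].
  split; [apply (crit_at beta (1/3) (1/3) (1/3)); auto; [lra|left; auto]|].
  apply local_max_center; auto.
Qed.

End M0c.

Theorem proposition4p2 :
  forall m0 : R,
  0 < m0 < 1/2 ->
  (forall t, 0 < t < 1/2 -> f0 m0 <= f0 t) ->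
  let beta3 := f0 m0 in
  (* (1) *)
  (forall beta, 0 < beta < beta3 ->
     (forall x1 x2, in_int_Xi x1 x2 ->
        (critical beta x1 x2 <-> (x1, x2) = (1/3, 1/3))) /\
     global_min beta (1/3) (1/3))
  /\
  (* (2) beta = beta3, p_beta = q_beta = m0 *)
  (let beta := beta3 in
   let p := m0 in
   (forall x1 x2, in_int_Xi x1 x2 ->
      (critical beta x1 x2 <->
         (x1, x2) = (p, p) \/ (x1, x2) = (1 - 2 * p, p) \/
         (x1, x2) = (p, 1 - 2 * p) \/ (x1, x2) = (1/3, 1/3))) /\
   (degenerate_critical beta p p /\ ~ local_min beta p p) /\
   (degenerate_critical beta (1 - 2 * p) p /\ ~ local_min beta (1 - 2 * p) p) /\
   (degenerate_critical beta p (1 - 2 * p) /\ ~ local_min beta p (1 - 2 * p)) /\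
   global_min beta (1/3) (1/3))
  /\
  (* (3) *)
  (forall beta p q, beta3 < beta < beta1 ->
     0 < p < m0 -> m0 < q < 1/2 -> f0 p = beta -> f0 q = beta ->
     (forall x1 x2, in_int_Xi x1 x2 ->
        (critical beta x1 x2 <->
           (x1, x2) = (p, p) \/ (x1, x2) = (1 - 2 * p, p) \/
           (x1, x2) = (p, 1 - 2 * p) \/ (x1, x2) = (1/3, 1/3) \/
           (x1, x2) = (q, q) \/ (x1, x2) = (1 - 2 * q, q) \/
           (x1, x2) = (q, 1 - 2 * q))) /\
     (critical beta p p /\ local_min beta p p) /\
     (critical beta (1 - 2 * p) p /\ local_min beta (1 - 2 * p) p) /\
     (critical beta p (1 - 2 * p) /\ local_min beta p (1 - 2 * p)) /\
     (critical beta (1/3) (1/3) /\ local_min beta (1/3) (1/3)) /\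
     saddle beta q q /\ saddle beta (1 - 2 * q) q /\ saddle beta q (1 - 2 * q))
  /\
  (* (4) *)
  (forall p, let beta := beta1 in
     0 < p < m0 -> f0 p = beta ->
     (forall x1 x2, in_int_Xi x1 x2 ->
        (critical beta x1 x2 <->
           (x1, x2) = (p, p) \/ (x1, x2) = (1 - 2 * p, p) \/
           (x1, x2) = (p, 1 - 2 * p) \/ (x1, x2) = (1/3, 1/3))) /\
     (critical beta p p /\ local_min beta p p) /\
     (critical beta (1 - 2 * p) p /\ local_min beta (1 - 2 * p) p) /\
     (critical beta p (1 - 2 * p) /\ local_min beta p (1 - 2 * p)) /\
     (degenerate_critical beta (1/3) (1/3) /\ ~ local_min beta (1/3) (1/3)))
  /\
  (* (5) *)
  (forall beta p q, beta1 < beta ->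
     0 < p < m0 -> m0 < q < 1/2 -> f0 p = beta -> f0 q = beta ->
     (forall x1 x2, in_int_Xi x1 x2 ->
        (critical beta x1 x2 <->
           (x1, x2) = (p, p) \/ (x1, x2) = (1 - 2 * p, p) \/
           (x1, x2) = (p, 1 - 2 * p) \/ (x1, x2) = (1/3, 1/3) \/
           (x1, x2) = (q, q) \/ (x1, x2) = (1 - 2 * q, q) \/
           (x1, x2) = (q, 1 - 2 * q))) /\
     (critical beta p p /\ global_min beta p p) /\
     (critical beta (1 - 2 * p) p /\ global_min beta (1 - 2 * p) p) /\
     (critical beta p (1 - 2 * p) /\ global_min beta p (1 - 2 * p)) /\
     saddle beta q q /\ saddle beta (1 - 2 * q) q /\ saddle beta q (1 - 2 * q) /\
     (critical beta (1/3) (1/3) /\ local_max beta (1/3) (1/3))).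
Proof.
  intros m0 Hm0 Hmin. cbv zeta.
  split; [intros b Hb; eapply part1; eauto|].
  split; [eapply part2; eauto|].
  split; [intros b p q Hb Hp Hq Fp Fq; unfold beta1 in Hb; eapply part3; eauto|].
  split; [intros p Hp Fp; unfold beta1 in *; eapply part4; eauto|].
  intros b p q Hb Hp Hq Fp Fq; unfold beta1 in Hb; eapply part5; eauto.
Qed.
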